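(* Assume $S^\perp(\mathcal T^\perp)=\{S^\perp y: y\in\mathcal T^\perp\}\neq\{0\}$ and define $$\nu:=\inf\Big\{\frac{\|T^\perp x\|}{\|x\|}:\ x\in S^\perp(\mathcal T^\perp),\ x\neq0\Big\}.$$ Then $\nu=\gamma(\mathcal S,\mathcal T^\perp)=\cos\theta_{\max}$.
   Context: $\mathcal H$ is a Hilbert space; $\mathcal S,\mathcal T\subseteq\mathcal H$ closed subspaces with orthogonal projectors $S,T$; $S^\perp=I-S$, $T^\perp=I-T$. For closed subspaces $\mathcal F,\mathcal G$ the minimal gap is $\gamma(\mathcal F,\mathcal G)=\inf_{g\in\mathcal F\setminus\mathcal G}\operatorname{dist}(g,\mathcal G)/\operatorname{dist}(g,\mathcal F\cap\mathcal G)$. With $P_{\mathcal F},P_{\mathcal G}$ the orthogonal projectors, the set of angles from $\mathcal F$ to $\mathcal G$ is $\hat\Theta(\mathcal F,\mathcal G)=\{\arccos\sigma:\ \sigma\ge0,\ \sigma^2\in\Sigma((P_{\mathcal F}P_{\mathcal G})|_{\mathcal F})\}$, where $\Sigma$ denotes the spectrum and $(\cdot)|_{\mathcal F}$ the restriction to $\mathcal F$; the angles between $\mathcal F$ and $\mathcal G$ are $\Theta(\mathcal F,\mathcal G)=\hat\Theta(\mathcal F,\mathcal G)\cap\hat\Theta(\mathcal G,\mathcal F)$. The largest nontrivial angle is $\theta_{\max}=\sup\big(\Theta(\mathcal S,\mathcal T)\setminus\{\pi/2\}\big)$, with the convention $\sup\emptyset=0$. *)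

(* Defs.v *)
From Stdlib Require Import Reals Lra ClassicalEpsilon.
Open Scope R_scope.

Record HilbertSpace := {
  hcar :> Type;
  hzero : hcar;
  hadd : hcar -> hcar -> hcar;
  hopp : hcar -> hcar;
  hscal : R -> hcar -> hcar;
  hinner : hcar -> hcar -> R;
  hadd_assoc : forall x y z, hadd x (hadd y z) = hadd (hadd x y) z;
  hadd_comm : forall x y, hadd x y = hadd y x;
  hadd_zero : forall x, hadd x hzero = x;
  hadd_opp : forall x, hadd x (hopp x) = hzero;
  hscal_assoc : forall a b x, hscal a (hscal b x) = hscal (a * b) x;
  hscal_one : forall x, hscal 1 x = x;
  hscal_distr_v : forall a x y, hscal a (hadd x y) = hadd (hscal a x) (hscal a y);
  hscal_distr_s : forall a b x, hscal (a + b) x = hadd (hscal a x) (hscal b x);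
  hinner_sym : forall x y, hinner x y = hinner y x;
  hinner_add : forall x y z, hinner (hadd x y) z = hinner x z + hinner y z;
  hinner_scal : forall a x y, hinner (hscal a x) y = a * hinner x y;
  hinner_pos : forall x, 0 <= hinner x x;
  hinner_def : forall x, hinner x x = 0 -> x = hzero;
  hcomplete : forall u : nat -> hcar,
    (forall eps, 0 < eps -> exists N, forall m n, (N <= m)%nat -> (N <= n)%nat ->
        sqrt (hinner (hadd (u m) (hopp (u n))) (hadd (u m) (hopp (u n)))) < eps) ->
    exists l, forall eps, 0 < eps -> exists N, forall n, (N <= n)%nat ->
        sqrt (hinner (hadd (u n) (hopp l)) (hadd (u n) (hopp l))) < eps
}.

Arguments hzero {_}.
Arguments hadd {_} _ _.
Arguments hopp {_} _.
Arguments hscal {_} _ _.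
Arguments hinner {_} _ _.

Definition hsub {H : HilbertSpace} (x y : H) : H := hadd x (hopp y).
Definition hnorm {H : HilbertSpace} (x : H) : R := sqrt (hinner x x).

(* Rsup E = least upper bound if E is nonempty and bounded above;
   convention sup of the empty set = 0 (as in the paper). *)
Definition Rsup (E : R -> Prop) : R :=
  match excluded_middle_informative (bound E /\ exists x, E x) with
  | left h => proj1_sig (completeness E (proj1 h) (proj2 h))
  | right _ => 0
  end.
Definition Rinf (E : R -> Prop) : R := - Rsup (fun x => E (- x)).

Definition seq_lim {H : HilbertSpace} (u : nat -> H) (l : H) : Prop :=
  forall eps, 0 < eps -> exists N, forall n, (N <= n)%nat -> hnorm (hsub (u n) l) < eps.

Definition closed_subspace {H : HilbertSpace} (F : H -> Prop) : Prop :=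
  F hzero /\
  (forall x y, F x -> F y -> F (hadd x y)) /\
  (forall a x, F x -> F (hscal a x)) /\
  (forall u l, (forall n, F (u n)) -> seq_lim u l -> F l).

Definition is_orth_proj {H : HilbertSpace} (F : H -> Prop) (P : H -> H) : Prop :=
  forall x, F (P x) /\ forall y, F y -> hinner (hsub x (P x)) y = 0.

Definition orth_compl {H : HilbertSpace} (F : H -> Prop) : H -> Prop :=
  fun y => forall x, F x -> hinner y x = 0.

Definition cap {H : HilbertSpace} (F G : H -> Prop) : H -> Prop :=
  fun x => F x /\ G x.

Definition dist {H : HilbertSpace} (g : H) (A : H -> Prop) : R :=
  Rinf (fun r => exists a, A a /\ r = hnorm (hsub g a)).

(* Kato's convention: gamma(F,G) = 1 when F is contained in G (F \ G empty). *)
Definition gamma {H : HilbertSpace} (F G : H -> Prop) : R :=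
  match excluded_middle_informative (forall g, F g -> G g) with
  | left _ => 1
  | right _ =>
      Rinf (fun r => exists g, F g /\ ~ G g /\ r = dist g G / dist g (cap F G))
  end.

Definition in_spectrum_restr {H : HilbertSpace} (A : H -> H) (F : H -> Prop) (lam : R) : Prop :=
  ~ exists B : H -> H,
      (forall x, F x -> F (B x)) /\
      (exists C, forall x, F x -> hnorm (B x) <= C * hnorm x) /\
      (forall x, F x -> B (hsub (A x) (hscal lam x)) = x) /\
      (forall x, F x -> hsub (A (B x)) (hscal lam (B x)) = x).

Definition hatTheta {H : HilbertSpace} (PF : H -> H) (F : H -> Prop) (PG : H -> H)
    (th : R) : Prop :=
  exists sigma, 0 <= sigma /\
    in_spectrum_restr (fun x => PF (PG x)) F (sigma ^ 2) /\ th = acos sigma.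

Definition Theta {H : HilbertSpace} (PF : H -> H) (F : H -> Prop)
    (PG : H -> H) (G : H -> Prop) (th : R) : Prop :=
  hatTheta PF F PG th /\ hatTheta PG G PF th.

Definition theta_max {H : HilbertSpace} (PS : H -> H) (S : H -> Prop)
    (PT : H -> H) (T : H -> Prop) : R :=
  Rsup (fun th => Theta PS S PT T th /\ th <> PI / 2).

(* Main.v *)
Require Import Defs.
From Stdlib Require Import Reals Lra Lia ClassicalEpsilon Classical.
Open Scope R_scope.

Section Basic.
Context {H : HilbertSpace}.
Implicit Types x y z u v w : H.

Lemma ip_add_l x y z : hinner (hadd x y) z = hinner x z + hinner y z.
Proof. apply hinner_add. Qed.
Lemma ip_add_r x y z : hinner z (hadd x y) = hinner z x + hinner z y.
Proof. rewrite hinner_sym, hinner_add, (hinner_sym _ x), (hinner_sym _ y); ring. Qed.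
Lemma ip_scal_l a x y : hinner (hscal a x) y = a * hinner x y.
Proof. apply hinner_scal. Qed.
Lemma ip_scal_r a x y : hinner y (hscal a x) = a * hinner y x.
Proof. rewrite hinner_sym, hinner_scal, hinner_sym; ring. Qed.
Lemma ip_zero_l y : hinner (@hzero H) y = 0.
Proof.
  assert (E : hinner (hadd (@hzero H) hzero) y = hinner (@hzero H) y) by (rewrite hadd_zero; auto).
  rewrite hinner_add in E; lra.
Qed.
Lemma ip_zero_r y : hinner y (@hzero H) = 0.
Proof. rewrite hinner_sym; apply ip_zero_l. Qed.
Lemma ip_opp_l x y : hinner (hopp x) y = - hinner x y.
Proof.
  assert (E := ip_zero_l y). rewrite <- (hadd_opp _ x), hinner_add in E; lra.
Qed.
Lemma ip_opp_r x y : hinner y (hopp x) = - hinner y x.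
Proof. rewrite hinner_sym, ip_opp_l, hinner_sym; ring. Qed.
Lemma ip_sub_l x y z : hinner (hsub x y) z = hinner x z - hinner y z.
Proof. unfold hsub; rewrite ip_add_l, ip_opp_l; ring. Qed.
Lemma ip_sub_r x y z : hinner z (hsub x y) = hinner z x - hinner z y.
Proof. unfold hsub; rewrite ip_add_r, ip_opp_r; ring. Qed.

Lemma hadd_zero_l x : hadd hzero x = x.
Proof. rewrite hadd_comm; apply hadd_zero. Qed.

Lemma hsub_eq0 x y : hsub x y = hzero -> x = y.
Proof.
  unfold hsub; intro E.
  rewrite <- (hadd_zero _ x), <- (hadd_opp _ y), (hadd_comm _ y), hadd_assoc, E, hadd_zero_l; auto.
Qed.

Lemma vec_ext u v : (forall w, hinner u w = hinner v w) -> u = v.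
Proof.
  intro E. apply hsub_eq0, hinner_def.
  rewrite ip_sub_l, E; ring.
Qed.

Lemma ip_sym x y : hinner x y = hinner y x.
Proof. apply hinner_sym. Qed.

Lemma hnorm_ge0 x : 0 <= hnorm x.
Proof. apply sqrt_pos. Qed.
Lemma hnorm_sq x : hnorm x * hnorm x = hinner x x.
Proof. unfold hnorm; apply sqrt_sqrt, hinner_pos. Qed.
Lemma hnorm_zero : hnorm (@hzero H) = 0.
Proof. unfold hnorm; rewrite ip_zero_l; apply sqrt_0. Qed.
Lemma hnorm_eq0 x : hnorm x = 0 -> x = hzero.
Proof. intro E. apply hinner_def. rewrite <- hnorm_sq, E; ring. Qed.
Lemma hnorm_pos x : x <> hzero -> 0 < hnorm x.
Proof.
  intro Hx. destruct (hnorm_ge0 x) as [h|h]; auto. exfalso; apply Hx, hnorm_eq0; auto.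
Qed.
Lemma ip_pos_of_ne x : x <> hzero -> 0 < hinner x x.
Proof.
  intro Hx. destruct (hinner_pos _ x) as [h|h]; auto. exfalso; apply Hx, hinner_def; auto.
Qed.

Lemma sqrt_le_of_sq a b : 0 <= b -> a * a <= b * b -> a <= b.
Proof. intros Hb Hab. destruct (Rle_or_lt a b); auto. nra. Qed.

Lemma hnorm_le_of_ip x y : hinner x x <= hinner y y -> hnorm x <= hnorm y.
Proof. intro E. unfold hnorm. apply sqrt_le_1_alt; auto. Qed.

Lemma hnorm_le_iff x b : 0 <= b -> hinner x x <= b * b -> hnorm x <= b.
Proof. intros Hb E. apply sqrt_le_of_sq; auto. rewrite hnorm_sq; auto. Qed.

Lemma quad_disc a b c : 0 <= c -> (forall t, 0 <= a + 2 * b * t + c * t * t) -> b * b <= a * c.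
Proof.
  intros Hc Ht. destruct Hc as [Hc|Hc].
  - specialize (Ht (- b / c)).
    assert (E : a + 2 * b * (- b / c) + c * (- b / c) * (- b / c) = (a * c - b * b) / c) by (field; lra).
    rewrite E in Ht. apply Rmult_le_compat_r with (r := c) in Ht; [|lra].
    unfold Rdiv in Ht. rewrite Rmult_assoc, Rinv_l in Ht; lra.
  - subst c. destruct (Req_dec b 0) as [->|Hb]; [nra|].
    specialize (Ht (- (a + 1) / (2 * b))).
    assert (E : a + 2 * b * (- (a + 1) / (2 * b)) + 0 * (- (a + 1) / (2 * b)) * (- (a + 1) / (2 * b)) = -1) by (field; lra).
    lra.
Qed.

Lemma cauchy_schwarz x y : hinner x y * hinner x y <= hinner x x * hinner y y.
Proof.
  apply quad_disc; [apply hinner_pos|]. intro t.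
  assert (E := hinner_pos _ (hadd x (hscal t y))).
  rewrite ip_add_l, !ip_add_r, !ip_scal_l, !ip_scal_r, (ip_sym y x) in E. nra.
Qed.

Lemma cs_norm x y : Rabs (hinner x y) <= hnorm x * hnorm y.
Proof.
  apply sqrt_le_of_sq.
  - apply Rmult_le_pos; apply hnorm_ge0.
  - rewrite <- Rabs_mult, Rabs_mult, <- Rabs_mult.
    replace (hnorm x * hnorm y * (hnorm x * hnorm y)) with ((hnorm x * hnorm x) * (hnorm y * hnorm y)) by ring.
    rewrite !hnorm_sq, Rabs_right by (apply Rle_ge, Rle_0_sqr).
    apply cauchy_schwarz.
Qed.

Lemma cs_le x y : hinner x y <= hnorm x * hnorm y.
Proof. eapply Rle_trans; [apply Rle_abs|apply cs_norm]. Qed.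

Lemma hnorm_triangle x y : hnorm (hadd x y) <= hnorm x + hnorm y.
Proof.
  apply hnorm_le_iff. { generalize (hnorm_ge0 x) (hnorm_ge0 y); lra. }
  rewrite ip_add_l, !ip_add_r.
  assert (C := cs_le x y). rewrite (ip_sym y x). rewrite <- !hnorm_sq. nra.
Qed.

Lemma hnorm_scal a x : hnorm (hscal a x) = Rabs a * hnorm x.
Proof.
  unfold hnorm. rewrite ip_scal_l, ip_scal_r, <- Rmult_assoc, sqrt_mult_alt.
  - f_equal. apply sqrt_Rsqr_abs.
  - apply Rle_0_sqr.
Qed.

End Basic.

Lemma Rsup_lub E : bound E -> (exists x, E x) -> is_lub E (Rsup E).
Proof.
  intros Hb Hn. unfold Rsup. destruct excluded_middle_informative as [h|h].
  - destruct (completeness E (proj1 h) (proj2 h)) as [s Hs]; simpl; auto.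
  - exfalso; tauto.
Qed.

Lemma Rsup_empty E : ~ (exists x, E x) -> Rsup E = 0.
Proof.
  intros Hn. unfold Rsup. destruct excluded_middle_informative as [h|h]; auto.
  exfalso; tauto.
Qed.

Lemma Rinf_le (E : R -> Prop) x : E x -> (exists m, forall y, E y -> m <= y) -> Rinf E <= x.
Proof.
  intros Ex [m Hm]. unfold Rinf.
  assert (L : is_lub (fun t => E (- t)) (Rsup (fun t => E (- t)))).
  { apply Rsup_lub.
    - exists (- m). intros t Et. specialize (Hm _ Et). lra.
    - exists (- x). rewrite Ropp_involutive; auto. }
  destruct L as [L1 L2]. assert (h : - x <= Rsup (fun t => E (- t))).
  { apply L1. cbv beta. rewrite Ropp_involutive; auto. }
  lra.
Qed.

Lemma Rinf_ge (E : R -> Prop) m : (exists x, E x) -> (forall y, E y -> m <= y) -> m <= Rinf E.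
Proof.
  intros [x Ex] Hm. unfold Rinf.
  assert (L : is_lub (fun t => E (- t)) (Rsup (fun t => E (- t)))).
  { apply Rsup_lub.
    - exists (- m). intros t Et. specialize (Hm _ Et). lra.
    - exists (- x). rewrite Ropp_involutive; auto. }
  destruct L as [L1 L2]. assert (h : Rsup (fun t => E (- t)) <= - m).
  { apply L2. intros t Et. specialize (Hm _ Et). lra. }
  lra.
Qed.

Lemma Rinf_approx (E : R -> Prop) eps : (exists x, E x) -> (exists m, forall y, E y -> m <= y) ->
  0 < eps -> exists x, E x /\ x < Rinf E + eps.
Proof.
  intros Hn Hb He. destruct (classic (exists x, E x /\ x < Rinf E + eps)) as [h|h]; auto.
  exfalso. assert (G : Rinf E + eps <= Rinf E).
  { apply Rinf_ge; auto. intros y Ey. destruct (Rle_or_lt (Rinf E + eps) y); auto.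
    exfalso; apply h; eauto. }
  lra.
Qed.

Lemma Rsup_max (E : R -> Prop) a : E a -> (forall y, E y -> y <= a) -> Rsup E = a.
Proof.
  intros Ea Hb. destruct (Rsup_lub E) as [L1 L2]; [exists a; auto|eauto|].
  apply Rle_antisym; [apply L2; intros y Ey; auto| apply L1; auto].
Qed.

Lemma Rsup_char (E : R -> Prop) a : (forall y, E y -> y <= a) ->
  (forall eps, 0 < eps -> exists y, E y /\ a - eps < y) -> Rsup E = a.
Proof.
  intros Hb Ha. destruct (Ha 1 Rlt_0_1) as [y0 [Ey0 _]].
  destruct (Rsup_lub E) as [L1 L2]; [exists a; auto|eauto|].
  apply Rle_antisym; [apply L2; intros y Ey; auto|].
  destruct (Rle_or_lt a (Rsup E)) as [h|h]; auto.
  destruct (Ha (a - Rsup E)) as [y [Ey Hy]]; [lra|]. specialize (L1 _ Ey). lra.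
Qed.

Section Lim.
Context {H : HilbertSpace}.

Lemma hsub_self (x : H) : hsub x x = hzero.
Proof. apply hadd_opp. Qed.

Lemma hnorm_sub_sym (x y : H) : hnorm (hsub x y) = hnorm (hsub y x).
Proof. unfold hnorm. f_equal. rewrite !ip_sub_l, !ip_sub_r. rewrite (ip_sym x y). ring. Qed.

Lemma hnorm_sub_tri (x y z : H) : hnorm (hsub x z) <= hnorm (hsub x y) + hnorm (hsub y z).
Proof.
  replace (hsub x z) with (hadd (hsub x y) (hsub y z)). { apply hnorm_triangle. }
  apply vec_ext; intro w. rewrite ip_add_l, !ip_sub_l. ring.
Qed.

Lemma seq_lim_unique (u : nat -> H) l1 l2 : seq_lim u l1 -> seq_lim u l2 -> l1 = l2.
Proof.
  intros L1 L2. apply hsub_eq0, hnorm_eq0.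
  apply Rle_antisym; [|apply hnorm_ge0].
  apply Rnot_lt_le; intro Hp.
  destruct (L1 (hnorm (hsub l1 l2) / 2)) as [N1 H1]; [lra|].
  destruct (L2 (hnorm (hsub l1 l2) / 2)) as [N2 H2]; [lra|].
  specialize (H1 (N1 + N2)%nat ltac:(lia)). specialize (H2 (N1 + N2)%nat ltac:(lia)).
  assert (T := hnorm_sub_tri l1 (u (N1 + N2)%nat) l2).
  rewrite (hnorm_sub_sym l1 (u (N1 + N2)%nat)) in T. lra.
Qed.

Lemma seq_lim_shift (u : nat -> H) l : seq_lim u l -> seq_lim (fun n => u (S n)) l.
Proof. intros L e He. destruct (L e He) as [N HN]. exists N. intros n Hn. apply HN; lia. Qed.

Lemma seq_lim_lip (F : H -> Prop) (f : H -> H) L (u : nat -> H) l :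
  0 <= L -> (forall x y, F x -> F y -> hnorm (hsub (f x) (f y)) <= L * hnorm (hsub x y)) ->
  (forall n, F (u n)) -> F l -> seq_lim u l -> seq_lim (fun n => f (u n)) (f l).
Proof.
  intros HL Hf Fu Fl Lu e He.
  destruct (Lu (e / (L + 1))) as [N HN]. { apply Rdiv_lt_0_compat; lra. }
  exists N. intros n Hn. eapply Rle_lt_trans; [apply Hf; auto|].
  specialize (HN n Hn).
  apply Rle_lt_trans with ((L + 1) * hnorm (hsub (u n) l)).
  { apply Rmult_le_compat_r; [apply hnorm_ge0|lra]. }
  apply Rmult_lt_compat_l with (r := L + 1) in HN; [|lra].
  replace ((L + 1) * (e / (L + 1))) with e in HN by (field; lra). auto.
Qed.

Lemma seq_lim_closed (F : H -> Prop) (u : nat -> H) l :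
  closed_subspace F -> (forall n, F (u n)) -> seq_lim u l -> F l.
Proof. intros [_ [_ [_ C]]] Fu Lu. eapply C; eauto. Qed.

Lemma seq_lim_norm_le (u : nat -> H) l B : seq_lim u l -> (forall n, hnorm (u n) <= B) -> hnorm l <= B.
Proof.
  intros Lu Hb. apply Rnot_lt_le; intro Hl.
  destruct (Lu (hnorm l - B)) as [N HN]; [lra|]. specialize (HN N (le_n _)).
  assert (T := hnorm_triangle (u N) (hsub l (u N))).
  replace (hadd (u N) (hsub l (u N))) with l in T.
  2:{ apply vec_ext; intro w. rewrite ip_add_l, ip_sub_l. ring. }
  rewrite hnorm_sub_sym in T. specialize (Hb N). lra.
Qed.

Lemma seq_lim_ip_zero (u : nat -> H) l k : seq_lim u l -> (forall n, hinner (u n) k = 0) -> hinner l k = 0.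
Proof.
  intros Lu Hk. destruct (Req_dec (hinner l k) 0) as [h|h]; auto. exfalso.
  assert (Hp := Rabs_pos_lt _ h).
  destruct (Lu (Rabs (hinner l k) / (hnorm k + 1))) as [N HN].
  { apply Rdiv_lt_0_compat; [lra| generalize (hnorm_ge0 k); lra]. }
  specialize (HN N (le_n _)).
  assert (E : hinner l k = - hinner (hsub (u N) l) k) by (rewrite ip_sub_l, Hk; ring).
  assert (C := cs_norm (hsub (u N) l) k).
  rewrite E, Rabs_Ropp in Hp. rewrite E, Rabs_Ropp in HN.
  assert (hk := hnorm_ge0 k). assert (hu := hnorm_ge0 (hsub (u N) l)).
  apply Rmult_lt_compat_r with (r := hnorm k + 1) in HN; [|lra].
  replace (Rabs (hinner (hsub (u N) l) k) / (hnorm k + 1) * (hnorm k + 1)) with (Rabs (hinner (hsub (u N) l) k)) in HN by (field; lra).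
  nra.
Qed.

Lemma geom_partial (u : nat -> H) C q : 0 <= q < 1 ->
  (forall n, hnorm (hsub (u (S n)) (u n)) <= C * q ^ n) ->
  forall n k, hnorm (hsub (u (n + k)%nat) (u n)) <= C * q ^ n * (1 - q ^ k) / (1 - q).
Proof.
  intros Hq Hu n k. induction k as [|k IH].
  - rewrite Nat.add_0_r, hsub_self, hnorm_zero. simpl. replace (C * q ^ n * (1 - 1) / (1 - q)) with 0 by (field; lra). lra.
  - eapply Rle_trans; [apply (hnorm_sub_tri _ (u (n + k)%nat))|].
    replace (n + S k)%nat with (S (n + k)) by lia.
    eapply Rle_trans; [apply Rplus_le_compat; [apply Hu|apply IH]|].
    rewrite pow_add. right. simpl. field. lra.
Qed.

Lemma geom_conv (u : nat -> H) C q : 0 <= q < 1 ->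
  (forall n, hnorm (hsub (u (S n)) (u n)) <= C * q ^ n) ->
  exists l, seq_lim u l /\ forall n, hnorm (hsub l (u n)) <= C * q ^ n / (1 - q).
Proof.
  intros Hq Hu.
  assert (C0 : 0 <= C). { specialize (Hu 0%nat). simpl in Hu. generalize (hnorm_ge0 (hsub (u 1%nat) (u 0%nat))). lra. }
  assert (Bd : forall n k, hnorm (hsub (u (n + k)%nat) (u n)) <= C * q ^ n / (1 - q)).
  { intros n k. assert (G := geom_partial u C q Hq Hu n k). eapply Rle_trans; [exact G|].
    unfold Rdiv. apply Rmult_le_compat_r; [apply Rlt_le, Rinv_0_lt_compat; lra|].
    assert (0 <= q ^ n) by (apply pow_le; lra). assert (0 <= q ^ k) by (apply pow_le; lra).
    assert (0 <= C * q ^ n * q ^ k) by (repeat apply Rmult_le_pos; auto). lra. }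
  assert (Pw : forall e, 0 < e -> exists N, forall n, (N <= n)%nat -> C * q ^ n / (1 - q) < e).
  { intros e He. destruct (pow_lt_1_zero q ltac:(rewrite Rabs_right; lra) (e * (1 - q) / (C + 1))) as [N HN].
    { apply Rdiv_lt_0_compat; [apply Rmult_lt_0_compat|]; lra. }
    exists N. intros n Hn. specialize (HN n Hn). rewrite Rabs_right in HN by (apply Rle_ge, pow_le; lra).
    apply Rmult_lt_compat_l with (r := C + 1) in HN; [|lra].
    replace ((C + 1) * (e * (1 - q) / (C + 1))) with (e * (1 - q)) in HN by (field; lra).
    assert (0 <= q ^ n) by (apply pow_le; lra).
    apply Rmult_lt_reg_r with (r := 1 - q); [lra|]. unfold Rdiv. rewrite Rmult_assoc, Rinv_l; nra. }
  destruct (hcomplete H u) as [l Hl].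
  { intros e He. destruct (Pw (e / 2)) as [N HN]; [lra|]. exists N. intros m n Hm Hn.
    fold (hsub (u m) (u n)). fold (hnorm (hsub (u m) (u n))).
    assert (A1 := Bd N (m - N)%nat). assert (A2 := Bd N (n - N)%nat).
    replace (N + (m - N))%nat with m in A1 by lia. replace (N + (n - N))%nat with n in A2 by lia.
    assert (T := hnorm_sub_tri (u m) (u N) (u n)). rewrite (hnorm_sub_sym (u N) (u n)) in T.
    specialize (HN N (le_n _)). lra. }
  assert (Ll : seq_lim u l) by exact Hl.
  exists l. split; auto. intros n.
  apply Rnot_lt_le; intro Hlt.
  destruct (Ll (hnorm (hsub l (u n)) - C * q ^ n / (1 - q))) as [N HN]; [lra|].
  specialize (HN (n + N)%nat ltac:(lia)). specialize (Bd n N).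
  assert (T := hnorm_sub_tri l (u (n + N)%nat) (u n)). rewrite (hnorm_sub_sym l (u (n + N)%nat)) in T. lra.
Qed.

End Lim.

Section Proj.
Context {H : HilbertSpace}.
Implicit Types x y z u v w : H.

Lemma hopp_scal x : hopp x = hscal (-1) x.
Proof. apply vec_ext; intro w. rewrite ip_opp_l, ip_scal_l; ring. Qed.

Lemma cs_zero (F : H -> Prop) : closed_subspace F -> F hzero.
Proof. intros [h _]; auto. Qed.
Lemma cs_add (F : H -> Prop) x y : closed_subspace F -> F x -> F y -> F (hadd x y).
Proof. intros [_ [h _]]; auto. Qed.
Lemma cs_scal (F : H -> Prop) a x : closed_subspace F -> F x -> F (hscal a x).
Proof. intros [_ [_ [h _]]]; auto. Qed.
Lemma cs_sub (F : H -> Prop) x y : closed_subspace F -> F x -> F y -> F (hsub x y).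
Proof. intros C Fx Fy. unfold hsub. rewrite hopp_scal. apply cs_add; auto. apply cs_scal; auto. Qed.

Lemma orth_compl_closed (F : H -> Prop) : closed_subspace (orth_compl F).
Proof.
  split; [|split; [|split]].
  - intros x _. apply ip_zero_l.
  - intros x y Hx Hy k Fk. rewrite ip_add_l, Hx, Hy; auto; ring.
  - intros a x Hx k Fk. rewrite ip_scal_l, Hx; auto; ring.
  - intros u l Hu Lu k Fk. apply (seq_lim_ip_zero u); auto. intro n; apply Hu; auto.
Qed.

Lemma cap_closed (F G : H -> Prop) : closed_subspace F -> closed_subspace G -> closed_subspace (cap F G).
Proof.
  intros CF CG. split; [|split; [|split]].
  - split; apply cs_zero; auto.
  - intros x y [] []; split; apply cs_add; auto.
  - intros a x []; split; apply cs_scal; auto.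
  - intros u l Hu Lu. split; eapply seq_lim_closed; eauto; intro n; apply Hu.
Qed.

Context (F : H -> Prop) (P : H -> H) (hF : closed_subspace F) (hP : is_orth_proj F P).

Lemma proj_in x : F (P x).
Proof. apply hP. Qed.
Lemma proj_orth x y : F y -> hinner (hsub x (P x)) y = 0.
Proof. apply hP. Qed.

Lemma proj_unique x p : F p -> (forall y, F y -> hinner (hsub x p) y = 0) -> P x = p.
Proof.
  intros Fp Hp. apply hsub_eq0, hinner_def.
  assert (Fd : F (hsub (P x) p)) by (apply cs_sub; auto; apply proj_in).
  assert (E1 := proj_orth x _ Fd). assert (E2 := Hp _ Fd).
  rewrite !ip_sub_l in E1, E2 |- *. lra.
Qed.

Lemma proj_fix x : F x -> P x = x.
Proof. intro Fx. apply proj_unique; auto. intros y Fy. rewrite hsub_self, ip_zero_l; auto. Qed.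

Lemma proj_add x y : P (hadd x y) = hadd (P x) (P y).
Proof.
  apply proj_unique. { apply cs_add; auto; apply proj_in. }
  intros z Fz. assert (E1 := proj_orth x _ Fz). assert (E2 := proj_orth y _ Fz).
  rewrite !ip_sub_l, !ip_add_l in *. lra.
Qed.

Lemma proj_scal a x : P (hscal a x) = hscal a (P x).
Proof.
  apply proj_unique. { apply cs_scal; auto; apply proj_in. }
  intros z Fz. assert (E1 := proj_orth x _ Fz).
  rewrite !ip_sub_l, !ip_scal_l in *. nra.
Qed.

Lemma proj_sub x y : P (hsub x y) = hsub (P x) (P y).
Proof.
  unfold hsub. rewrite hopp_scal, proj_add, proj_scal, <- hopp_scal; auto.
Qed.

Lemma proj_zero : P hzero = hzero.
Proof. apply proj_fix, cs_zero; auto. Qed.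

Lemma proj_ip_l x y : hinner (P x) y = hinner (P x) (P y).
Proof.
  assert (E := proj_orth y _ (proj_in x)). rewrite ip_sub_l in E.
  rewrite (ip_sym (P x) y), (ip_sym (P x) (P y)). lra.
Qed.

Lemma proj_sa x y : hinner (P x) y = hinner x (P y).
Proof.
  rewrite (proj_ip_l x y), (ip_sym x), (proj_ip_l y x), ip_sym; auto.
Qed.

Lemma proj_idem x : P (P x) = P x.
Proof. apply proj_fix, proj_in. Qed.

Lemma proj_ip_le x : hinner (P x) (P x) <= hinner x x.
Proof.
  assert (E := proj_orth x _ (proj_in x)).
  assert (Q := hinner_pos _ (hsub x (P x))).
  rewrite !ip_sub_l, !ip_sub_r in *. rewrite (ip_sym x (P x)) in *. lra.
Qed.

Lemma proj_norm_le x : hnorm (P x) <= hnorm x.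
Proof. apply hnorm_le_of_ip, proj_ip_le. Qed.

Lemma orth_iff_proj0 y : orth_compl F y <-> P y = hzero.
Proof.
  split.
  - intro Hy. apply proj_unique. { apply cs_zero; auto. }
    intros z Fz. rewrite ip_sub_l, ip_zero_l, Hy; auto; ring.
  - intros E x Fx. rewrite <- (proj_fix x Fx), <- proj_sa, E, ip_zero_l; auto.
Qed.

Lemma compl_in x : orth_compl F (hsub x (P x)).
Proof. intros y Fy. apply proj_orth; auto. Qed.

End Proj.

Section ST.
Context {H : HilbertSpace} (Ss Ts : H -> Prop) (S T : H -> H)
    (hSs : closed_subspace Ss) (hTs : closed_subspace Ts)
    (hS : is_orth_proj Ss S) (hT : is_orth_proj Ts T).

Definition A (u : H) : H := S (T u).
Definition Kset : H -> Prop := cap Ss (orth_compl Ts).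
Definition Mp : H -> Prop := cap Ss (orth_compl Kset).

Lemma K_closed : closed_subspace Kset.
Proof. apply cap_closed; auto. apply orth_compl_closed. Qed.
Lemma Mp_closed : closed_subspace Mp.
Proof. apply cap_closed; auto. apply orth_compl_closed. Qed.

Lemma T_orth y : orth_compl Ts y <-> T y = hzero.
Proof. apply orth_iff_proj0; auto. Qed.

Lemma A_add x y : A (hadd x y) = hadd (A x) (A y).
Proof. unfold A. rewrite (proj_add Ts T), (proj_add Ss S); auto. Qed.
Lemma A_scal a x : A (hscal a x) = hscal a (A x).
Proof. unfold A. rewrite (proj_scal Ts T), (proj_scal Ss S); auto. Qed.
Lemma A_sub x y : A (hsub x y) = hsub (A x) (A y).
Proof. unfold A. rewrite (proj_sub Ts T), (proj_sub Ss S); auto. Qed.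
Lemma A_in x : Ss (A x).
Proof. apply (proj_in Ss S); auto. Qed.

Lemma Sfix x : Ss x -> S x = x.
Proof. apply proj_fix; auto. Qed.

Lemma A_ip u : Ss u -> hinner (A u) u = hinner (T u) (T u).
Proof.
  intro Hu. unfold A. rewrite (proj_sa Ss S), Sfix, (proj_ip_l Ts T); auto.
Qed.

Lemma T_ip u v : hinner (T u) v = hinner (T u) (T v).
Proof. apply (proj_ip_l Ts T); auto. Qed.
Lemma T_sa u v : hinner (T u) v = hinner u (T v).
Proof. apply (proj_sa Ts T); auto. Qed.
Lemma S_sa u v : hinner (S u) v = hinner u (S v).
Proof. apply (proj_sa Ss S); auto. Qed.

Lemma A_sa u v : Ss u -> Ss v -> hinner (A u) v = hinner u (A v).
Proof.
  intros Hu Hv. unfold A. rewrite S_sa, (Sfix v), T_sa, <- (Sfix u) at 1; auto.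
  rewrite S_sa; auto.
Qed.

Lemma A_sq_le u : Ss u -> hinner (A u) (A u) <= hinner (A u) u.
Proof.
  intro Hu. rewrite A_ip; auto. unfold A. apply (proj_ip_le Ss S); auto.
Qed.

Lemma K_T k : Kset k -> T k = hzero.
Proof. intros [_ h]. apply T_orth; auto. Qed.

Lemma A_orthK v k : Kset k -> hinner (A v) k = 0.
Proof.
  intro Hk. unfold A. rewrite S_sa, (Sfix k), T_sa, K_T, ip_zero_r; auto. apply Hk.
Qed.

Lemma A_Mp v : Mp (A v).
Proof. split; [apply A_in|]. intros k Hk. apply A_orthK; auto. Qed.

Lemma A_K k : Kset k -> A k = hzero.
Proof. intro Hk. unfold A. rewrite K_T, (proj_zero Ss S); auto. Qed.

Lemma A_lip x y : hnorm (hsub (A x) (A y)) <= 1 * hnorm (hsub x y).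
Proof.
  rewrite <- A_sub, Rmult_1_l. unfold A.
  eapply Rle_trans; [apply (proj_norm_le Ss S); auto|apply (proj_norm_le Ts T); auto].
Qed.

Lemma A_norm_le x : hnorm (A x) <= hnorm x.
Proof.
  unfold A. eapply Rle_trans; [apply (proj_norm_le Ss S); auto|apply (proj_norm_le Ts T); auto].
Qed.

Lemma T_in x : Ts (T x).
Proof. apply (proj_in Ts T); auto. Qed.

Lemma Tu_ne0 g : ~ orth_compl Ts g -> T g <> hzero.
Proof. intros Hg E. apply Hg, T_orth; auto. Qed.

Lemma dist_le g (F : H -> Prop) a : F a -> Defs.dist g F <= hnorm (hsub g a).
Proof.
  intro Fa. unfold dist. apply Rinf_le; eauto. exists 0. intros y [b [_ ->]]. apply hnorm_ge0.
Qed.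

Lemma dist_ge g (F : H -> Prop) m : F hzero -> (forall a, F a -> m <= hnorm (hsub g a)) -> m <= Defs.dist g F.
Proof.
  intros F0 Hm. unfold dist. apply Rinf_ge; eauto. intros y [b [Fb ->]]; auto.
Qed.

Lemma dist_ge0 g (F : H -> Prop) : F hzero -> 0 <= Defs.dist g F.
Proof. intro F0. apply dist_ge; auto. intros; apply hnorm_ge0. Qed.

Lemma Tg_le g a : orth_compl Ts a -> hnorm (T g) <= hnorm (hsub g a).
Proof.
  intro Ha.
  assert (E : hinner (T g) (T g) = hinner (T g) (hsub g a)).
  { rewrite ip_sub_r, (ip_sym (T g) a), (Ha _ (T_in g)), <- T_ip. ring. }
  assert (C := cs_le (T g) (hsub g a)).
  rewrite <- hnorm_sq in E.
  assert (h1 := hnorm_ge0 (T g)). assert (h2 := hnorm_ge0 (hsub g a)).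
  destruct h1 as [h1|h1]; [|lra]. nra.
Qed.

Lemma dist_T g : Defs.dist g (orth_compl Ts) = hnorm (T g).
Proof.
  apply Rle_antisym.
  - replace (T g) with (hsub g (hsub g (T g))).
    + apply dist_le. apply (compl_in Ts T); auto.
    + apply vec_ext; intro w. rewrite !ip_sub_l; ring.
  - apply dist_ge. { apply (cs_zero _ (orth_compl_closed Ts)). } intros a Ha. apply Tg_le; auto.
Qed.

Lemma K_zero : Kset hzero.
Proof. apply (cs_zero _ K_closed). Qed.

Lemma distK_ge_T g : hnorm (T g) <= Defs.dist g Kset.
Proof. apply dist_ge. apply K_zero. intros a [_ Ha]. apply Tg_le; auto. Qed.

Lemma distK_le g : Defs.dist g Kset <= hnorm g.
Proof.
  replace (hnorm g) with (hnorm (hsub g hzero)). apply dist_le, K_zero.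
  f_equal. apply vec_ext; intro w. rewrite ip_sub_l, ip_zero_l; ring.
Qed.

Lemma distK_Mp w : Mp w -> Defs.dist w Kset = hnorm w.
Proof.
  intros [Sw Ow]. apply Rle_antisym; [apply distK_le|].
  apply dist_ge. apply K_zero. intros a Ka. apply hnorm_le_of_ip.
  rewrite !ip_sub_l, !ip_sub_r. rewrite (ip_sym a w), (Ow a Ka).
  assert (Pa := hinner_pos _ a). lra.
Qed.

Definition NS : Prop := ~ (forall g, Ss g -> orth_compl Ts g).

Definition gset (r : R) : Prop :=
  exists g, Ss g /\ ~ orth_compl Ts g /\ r = Defs.dist g (orth_compl Ts) / Defs.dist g (cap Ss (orth_compl Ts)).

Lemma gamma_eq : NS -> gamma Ss (orth_compl Ts) = Rinf gset.
Proof.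
  intro Hn. unfold gamma. destruct excluded_middle_informative as [h|h]; [exfalso; auto|]. reflexivity.
Qed.

Lemma gamma_subset : ~ NS -> gamma Ss (orth_compl Ts) = 1.
Proof.
  intro Hn. unfold gamma. destruct excluded_middle_informative as [h|h]; auto.
  exfalso. apply Hn. exact h.
Qed.

Lemma distK_pos g : ~ orth_compl Ts g -> 0 < Defs.dist g Kset.
Proof.
  intro Hg. eapply Rlt_le_trans; [|apply distK_ge_T]. apply hnorm_pos, Tu_ne0; auto.
Qed.

Lemma gset_elem g : Ss g -> ~ orth_compl Ts g -> gset (hnorm (T g) / Defs.dist g Kset).
Proof. intros Hs Hg. exists g. split; auto. split; auto. rewrite dist_T. reflexivity. Qed.

Lemma gset_lb : exists m, forall y, gset y -> m <= y.
Proof.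
  exists 0. intros y [g [Sg [Ng ->]]]. rewrite dist_T. fold Kset.
  apply Rmult_le_pos; [apply hnorm_ge0|]. apply Rlt_le, Rinv_0_lt_compat, distK_pos; auto.
Qed.

Lemma gset_ne : NS -> exists y, gset y.
Proof.
  intro Hn. apply not_all_ex_not in Hn. destruct Hn as [g Hg].
  apply imply_to_and in Hg. destruct Hg. eexists; apply gset_elem; eauto.
Qed.

Lemma gam_ge0 : NS -> 0 <= gamma Ss (orth_compl Ts).
Proof.
  intro Hn. rewrite gamma_eq; auto. apply Rinf_ge. apply gset_ne; auto.
  destruct gset_lb as [m Hm]. intros y Hy. destruct Hy as [g [Sg [Ng ->]]].
  rewrite dist_T. apply Rmult_le_pos; [apply hnorm_ge0|]. apply Rlt_le, Rinv_0_lt_compat, distK_pos; auto.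
Qed.

Lemma gam_le1 : NS -> gamma Ss (orth_compl Ts) <= 1.
Proof.
  intro Hn. rewrite gamma_eq; auto. destruct (gset_ne Hn) as [y Hy].
  eapply Rle_trans; [apply Rinf_le; [exact Hy|apply gset_lb]|].
  destruct Hy as [g [Sg [Ng ->]]]. rewrite dist_T. fold Kset.
  assert (P := distK_pos g Ng). assert (Q := distK_ge_T g).
  apply Rmult_le_reg_r with (Defs.dist g Kset); auto. unfold Rdiv. rewrite Rmult_assoc, Rinv_l; lra.
Qed.

Lemma gam_ratio g : NS -> Ss g -> ~ orth_compl Ts g ->
  gamma Ss (orth_compl Ts) * Defs.dist g Kset <= hnorm (T g).
Proof.
  intros Hn Sg Ng. rewrite gamma_eq; auto.
  assert (L := Rinf_le gset _ (gset_elem g Sg Ng) gset_lb).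
  assert (P := distK_pos g Ng).
  apply Rmult_le_compat_r with (r := Defs.dist g Kset) in L; [|lra].
  unfold Rdiv in L. rewrite Rmult_assoc, Rinv_l, Rmult_1_r in L; lra.
Qed.

Lemma gam_M w : NS -> Mp w -> gamma Ss (orth_compl Ts) * hnorm w <= hnorm (T w).
Proof.
  intros Hn Mw. destruct (classic (orth_compl Ts w)) as [h|h].
  - assert (w = hzero).
    { apply hinner_def. destruct Mw as [Sw Ow]. apply Ow. split; auto. }
    subst w. rewrite hnorm_zero, Rmult_0_r. apply hnorm_ge0.
  - rewrite <- (distK_Mp w Mw). apply gam_ratio; auto. apply Mw.
Qed.

Lemma gam_approx eps : NS -> 0 < eps -> exists g, Ss g /\ ~ orth_compl Ts g /\
  hnorm (T g) < (gamma Ss (orth_compl Ts) + eps) * Defs.dist g Kset.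
Proof.
  intros Hn He. rewrite gamma_eq; auto.
  destruct (Rinf_approx gset eps (gset_ne Hn) gset_lb He) as [y [[g [Sg [Ng ->]]] Hy]].
  exists g. split; auto. split; auto. rewrite dist_T in Hy. fold Kset in Hy.
  assert (P := distK_pos g Ng).
  apply Rmult_lt_compat_r with (r := Defs.dist g Kset) in Hy; auto.
  unfold Rdiv in Hy. rewrite Rmult_assoc, Rinv_l, Rmult_1_r in Hy; lra.
Qed.


Lemma pos_op_sq (F : H -> Prop) (P : H -> H) (beta : R) :
  0 <= beta ->
  (forall x y t, F x -> F y -> F (hadd x (hscal t y))) ->
  (forall x y t, P (hadd x (hscal t y)) = hadd (P x) (hscal t (P y))) ->
  (forall x, F x -> F (P x)) ->
  (forall x y, F x -> F y -> hinner (P x) y = hinner x (P y)) ->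
  (forall x, F x -> 0 <= hinner (P x) x) ->
  (forall x, F x -> hinner (P x) x <= beta * hinner x x) ->
  forall x, F x -> hinner (P x) (P x) <= beta * hinner (P x) x.
Proof.
  intros Hb Fl Pl FP Ps Ppos Pbd x Fx.
  set (y := P x).
  assert (Fy : F y) by (apply FP; auto).
  assert (Q : hinner (P x) y * hinner (P x) y <= hinner (P x) x * hinner (P y) y).
  { apply quad_disc. { apply Ppos; auto. }
    intro t. assert (E := Ppos _ (Fl x y t Fx Fy)). rewrite Pl in E.
    rewrite ip_add_l, !ip_add_r, !ip_scal_l, !ip_scal_r in E.
    rewrite (Ps y x) in E by auto. rewrite (ip_sym y (P x)) in E. nra. }
  assert (B := Pbd y Fy). fold y in Q |- *.
  assert (N0 := hinner_pos _ y). assert (P0 := Ppos x Fx).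
  fold y in P0, Q, B |- *. destruct N0 as [N0|N0].
  - assert (hinner y y * hinner y y <= hinner (P x) x * (beta * hinner y y)).
    { eapply Rle_trans; [exact Q|]. apply Rmult_le_compat_l; auto. }
    nra.
  - rewrite <- N0. nra.
Qed.

Definition Q2 (a b d : R) (x : H) : H := hadd (hscal a x) (hadd (hscal b (A x)) (hscal d (A (A x)))).

Lemma Q2_lin a b d x y t : Q2 a b d (hadd x (hscal t y)) = hadd (Q2 a b d x) (hscal t (Q2 a b d y)).
Proof.
  unfold Q2. repeat (rewrite A_add || rewrite A_scal). apply vec_ext; intro w.
  repeat (rewrite ip_add_l || rewrite ip_scal_l). ring.
Qed.

Lemma Q2_sa a b d x y : Ss x -> Ss y -> hinner (Q2 a b d x) y = hinner x (Q2 a b d y).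
Proof.
  intros Sx Sy. unfold Q2. rewrite !ip_add_l, !ip_add_r, !ip_scal_l, !ip_scal_r.
  rewrite (A_sa (A x) y), (A_sa x (A y)), (A_sa x y); auto; try apply A_in. all: try ring.
Qed.

Lemma Q2_form a b d x : Ss x -> hinner (Q2 a b d x) x = a * hinner x x + b * hinner (A x) x + d * hinner (A x) (A x).
Proof.
  intro Sx. unfold Q2. rewrite !ip_add_l, !ip_scal_l. rewrite (A_sa (A x) x) by (auto; apply A_in).
  ring.
Qed.

Lemma Q2_in_S a b d x : Ss x -> Ss (Q2 a b d x).
Proof.
  intro Sx. unfold Q2. apply cs_add; auto. apply cs_scal; auto.
  apply cs_add; auto; apply cs_scal; auto; apply A_in.
Qed.

Lemma Q2_in_M a b d x : Mp x -> Mp (Q2 a b d x).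
Proof.
  intro Mx. unfold Q2. apply cs_add; [apply Mp_closed| |]. apply cs_scal; auto; apply Mp_closed.
  apply cs_add; [apply Mp_closed| |]; apply cs_scal; try apply Mp_closed; apply A_Mp.
Qed.

Lemma S_lin x y t : Ss x -> Ss y -> Ss (hadd x (hscal t y)).
Proof. intros; apply cs_add; auto; apply cs_scal; auto. Qed.
Lemma M_lin x y t : Mp x -> Mp y -> Mp (hadd x (hscal t y)).
Proof. intros; apply cs_add; try apply Mp_closed; auto; apply cs_scal; auto; apply Mp_closed. Qed.

Lemma Q2_pos_S a b d beta : 0 <= beta ->
  (forall x, Ss x -> 0 <= hinner (Q2 a b d x) x) ->
  (forall x, Ss x -> hinner (Q2 a b d x) x <= beta * hinner x x) ->
  forall x, Ss x -> hinner (Q2 a b d x) (Q2 a b d x) <= beta * hinner (Q2 a b d x) x.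
Proof.
  intros Hb P1 P2. apply pos_op_sq; auto.
  - apply S_lin. - apply Q2_lin. - apply Q2_in_S. - apply Q2_sa.
Qed.

Lemma Q2_pos_M a b d beta : 0 <= beta ->
  (forall x, Mp x -> 0 <= hinner (Q2 a b d x) x) ->
  (forall x, Mp x -> hinner (Q2 a b d x) x <= beta * hinner x x) ->
  forall x, Mp x -> hinner (Q2 a b d x) (Q2 a b d x) <= beta * hinner (Q2 a b d x) x.
Proof.
  intros Hb P1 P2. apply pos_op_sq; auto.
  - apply M_lin. - apply Q2_lin. - apply Q2_in_M.
  - intros x y Mx My. apply Q2_sa; [apply Mx|apply My].
Qed.


Definition HC (c : R) : Prop := forall u, Ss u -> c * hinner (A u) (A u) <= hinner (A (A u)) (A u).

Lemma small_pow K q : 0 <= q < 1 -> 0 <= K -> forall e, 0 < e -> exists n, K * q ^ n < e.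
Proof.
  intros Hq HK e He.
  destruct (pow_lt_1_zero q ltac:(rewrite Rabs_right; lra) (e / (K + 1))) as [N HN].
  { apply Rdiv_lt_0_compat; lra. }
  exists N. specialize (HN N (le_n _)). rewrite Rabs_right in HN by (apply Rle_ge, pow_le; lra).
  apply Rmult_lt_compat_l with (r := K + 1) in HN; [|lra].
  replace ((K + 1) * (e / (K + 1))) with e in HN by (field; lra).
  assert (0 <= q ^ N) by (apply pow_le; lra). nra.
Qed.

Lemma hnorm_neg1 (v : H) : hnorm (hscal (-1) v) = hnorm v.
Proof. rewrite hnorm_scal. replace (Rabs (-1)) with 1 by (rewrite Rabs_left; lra). ring. Qed.

Lemma iter_step_bound c w : HC c -> 0 < c <= 1 -> (exists u, Ss u /\ w = A u) ->
  hnorm (hsub w (A w)) <= sqrt (1 - c) * hnorm w.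
Proof.
  intros Hc Hc1 [u [Su ->]].
  apply hnorm_le_iff. { apply Rmult_le_pos; [apply sqrt_pos|apply hnorm_ge0]. }
  replace (sqrt (1 - c) * hnorm (A u) * (sqrt (1 - c) * hnorm (A u))) with
    ((sqrt (1 - c) * sqrt (1 - c)) * (hnorm (A u) * hnorm (A u))) by ring.
  rewrite sqrt_sqrt by lra. rewrite hnorm_sq.
  assert (L := A_sq_le (A u) (A_in u)). assert (C := Hc u Su).
  rewrite !ip_sub_l, !ip_sub_r. rewrite (ip_sym (A u) (A (A u))). lra.
Qed.

Lemma decomp c g : 0 < c <= 1 -> HC c -> Ss g ->
  exists z, Kset z /\ Mp (hsub g z) /\ hnorm (hsub g z) <= hnorm (A g) / (1 - sqrt (1 - c)).
Proof.
  intros Hc1 Hc Sg.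
  set (q := sqrt (1 - c)).
  assert (Hq : 0 <= q < 1).
  { split; [apply sqrt_pos|]. unfold q. assert (h := sqrt_lt_1_alt (1 - c) 1 ltac:(lra)). rewrite sqrt_1 in h. exact h. }
  set (f := fun x => hsub x (A x)).
  set (u := fun n => Nat.iter n f g).
  assert (uS : forall n : nat, u (Datatypes.S n) = f (u n)) by reflexivity.
  assert (Su : forall n : nat, Ss (u n)).
  { induction n. exact Sg. rewrite uS. unfold f. apply cs_sub; auto. apply A_in. }
  assert (Bd : forall n : nat, hnorm (A (u n)) <= hnorm (A g) * q ^ n).
  { induction n. { simpl. lra. }
    rewrite uS. unfold f. rewrite A_sub.
    eapply Rle_trans; [apply (iter_step_bound c); eauto|].
    change (q ^ Datatypes.S n) with (q * q ^ n).
    assert (0 <= q) by apply Hq.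
    replace (hnorm (A g) * (q * q ^ n)) with (q * (hnorm (A g) * q ^ n)) by ring.
    apply Rmult_le_compat_l; auto. }
  assert (Step : forall n : nat, hnorm (hsub (u (Datatypes.S n)) (u n)) <= hnorm (A g) * q ^ n).
  { intro n. rewrite uS. unfold f. replace (hsub (hsub (u n) (A (u n))) (u n)) with (hscal (-1) (A (u n))).
    - rewrite hnorm_neg1. apply Bd.
    - apply vec_ext; intro w. rewrite !ip_sub_l, ip_scal_l. ring. }
  destruct (geom_conv u _ _ Hq Step) as [z [Lz Bz]].
  assert (Sz : Ss z) by (eapply seq_lim_closed; eauto).
  assert (Az : A z = hzero).
  { apply hnorm_eq0. apply Rle_antisym; [|apply hnorm_ge0]. apply Rnot_lt_le; intro Hp.
    assert (K0 : 0 <= hnorm (A g) * (1 + / (1 - q))).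
    { apply Rmult_le_pos; [apply hnorm_ge0|]. assert (0 < / (1 - q)) by (apply Rinv_0_lt_compat; lra). lra. }
    destruct (small_pow _ q Hq K0 (hnorm (A z)) Hp) as [n Hn].
    assert (T1 := hnorm_sub_tri (A z) (A (u n)) hzero).
    assert (E0 : forall v : H, hsub v hzero = v) by (intro v; apply vec_ext; intro w; rewrite ip_sub_l, ip_zero_l; ring).
    rewrite !E0 in T1.
    assert (T2 := A_lip z (u n)). specialize (Bz n). specialize (Bd n).
    assert (E1 : hnorm (A g) * q ^ n / (1 - q) = hnorm (A g) * q ^ n * / (1 - q)) by reflexivity.
    assert (hnorm (A g) * (1 + / (1 - q)) * q ^ n = hnorm (A g) * q ^ n + hnorm (A g) * q ^ n * / (1 - q)) by ring.
    lra. }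
  assert (Tz : orth_compl Ts z).
  { apply T_orth; auto. apply hinner_def. rewrite <- A_ip, Az; auto. apply ip_zero_l. }
  exists z. split; [split; auto|]. split.
  - split. { apply cs_sub; auto. }
    intros k Hk.
    assert (Ok : forall n : nat, hinner (hsub g (u n)) k = 0).
    { induction n. { simpl. rewrite hsub_self, ip_zero_l; auto. }
      rewrite uS. unfold f. replace (hsub g (hsub (u n) (A (u n)))) with (hadd (hsub g (u n)) (A (u n))).
      - rewrite ip_add_l, IHn, A_orthK; auto. ring.
      - apply vec_ext; intro w. rewrite ip_add_l, !ip_sub_l. ring. }
    apply (seq_lim_ip_zero (fun n => hsub g (u n))); auto.
    intros e He. destruct (Lz e He) as [N HN]. exists N. intros n Hn.
    replace (hsub (hsub g (u n)) (hsub g z)) with (hsub z (u n)).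
    + rewrite hnorm_sub_sym; auto.
    + apply vec_ext; intro w. rewrite !ip_sub_l. ring.
  - specialize (Bz 0%nat). simpl in Bz. rewrite Rmult_1_r in Bz.
    replace (hsub g z) with (hscal (-1) (hsub z g)).
    + rewrite hnorm_neg1. exact Bz.
    + apply vec_ext; intro w. rewrite ip_scal_l, !ip_sub_l. ring.
Qed.

Definition nuset (r : R) : Prop := exists x : H,
  (exists y, orth_compl Ts y /\ x = hsub y (S y)) /\ x <> hzero /\
  r = hnorm (hsub x (T x)) / hnorm x.

Lemma Tcompl_ip v : hinner (hsub v (T v)) (hsub v (T v)) = hinner v v - hinner (T v) (T v).
Proof.
  rewrite !ip_sub_l, !ip_sub_r. rewrite (ip_sym v (T v)), (T_ip v v). ring.
Qed.

Lemma nu_ratio_bounds x : x <> hzero -> 0 <= hnorm (hsub x (T x)) / hnorm x <= 1.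
Proof.
  intro Hx. assert (P := hnorm_pos x Hx).
  assert (L : hnorm (hsub x (T x)) <= hnorm x).
  { apply hnorm_le_of_ip. rewrite Tcompl_ip. generalize (hinner_pos _ (T x)); lra. }
  split.
  - apply Rmult_le_pos; [apply hnorm_ge0|apply Rlt_le, Rinv_0_lt_compat; auto].
  - apply Rmult_le_reg_r with (hnorm x); auto. unfold Rdiv. rewrite Rmult_assoc, Rinv_l; lra.
Qed.

Lemma nuset_lb : exists m, forall y, nuset y -> m <= y.
Proof. exists 0. intros r [x [_ [Hx ->]]]. apply nu_ratio_bounds; auto. Qed.

Lemma nu_ge0 : (exists r, nuset r) -> 0 <= Rinf nuset.
Proof. intro Hn. apply Rinf_ge; auto. intros r [x [_ [Hx ->]]]. apply nu_ratio_bounds; auto. Qed.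

Lemma nu_le1 : (exists r, nuset r) -> Rinf nuset <= 1.
Proof.
  intros [r Hr]. eapply Rle_trans; [apply Rinf_le; [exact Hr|apply nuset_lb]|].
  destruct Hr as [x [_ [Hx ->]]]. apply nu_ratio_bounds; auto.
Qed.

Lemma key_ineq x g : hinner g x = 0 -> T x = hopp (T g) ->
  hinner (T g) (T g) * hinner x x <= hinner g g * (hinner x x - hinner (T g) (T g)).
Proof.
  intros O1 Tx.
  set (a2 := hinner (T g) (T g)).
  assert (E : hinner (hsub g (T g)) (hsub x (T x)) = a2).
  { assert (F1 : hinner g (T x) = - a2).
    { rewrite Tx, ip_opp_r, (ip_sym g (T g)), (T_ip g g). reflexivity. }
    assert (F2 : hinner (T g) x = - a2) by (rewrite T_sa; auto).
    assert (F3 : hinner (T g) (T x) = - a2) by (rewrite Tx, ip_opp_r; reflexivity).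
    rewrite !ip_sub_l, !ip_sub_r. lra. }
  assert (C := cauchy_schwarz (hsub g (T g)) (hsub x (T x))).
  rewrite E, !Tcompl_ip in C. rewrite Tx, ip_opp_l, ip_opp_r in C. fold a2 in C.
  assert (0 <= a2) by apply hinner_pos. nra.
Qed.

Lemma nu_ge_gam : (exists r, nuset r) -> gamma Ss (orth_compl Ts) <= Rinf nuset.
Proof.
  intro Hne. apply Rinf_ge; auto.
  intros r [x [[y [Oy ->]] [Hx ->]]].
  set (x := hsub y (S y)) in *.
  assert (Pc := hnorm_pos x Hx).
  set (g := S y).
  assert (Sg : Ss g) by (apply (proj_in Ss S); auto).
  assert (Ox : orth_compl Ss x) by (apply (compl_in Ss S); auto).
  assert (Ty : T y = hzero) by (apply T_orth; auto).
  assert (Tx : T x = hopp (T g)).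
  { unfold x. rewrite (proj_sub Ts T), Ty; auto. apply vec_ext; intro w. rewrite ip_sub_l, ip_opp_l, ip_zero_l. unfold g. ring. }
  assert (Rb := nu_ratio_bounds x Hx).
  destruct (classic NS) as [Hn|Hn]; cycle 1.
  { rewrite gamma_subset; auto.
    assert (Tg : T g = hzero).
    { apply T_orth. apply NNPP in Hn. apply Hn; auto. }
    rewrite Tx, Tg. replace (hsub x (hopp hzero)) with x.
    - right. field. lra.
    - apply vec_ext; intro w. rewrite ip_sub_l, ip_opp_l, ip_zero_l. ring. }
  assert (G0 := gam_ge0 Hn). assert (G1 := gam_le1 Hn).
  set (gam := gamma Ss (orth_compl Ts)) in *.
  destruct (classic (orth_compl Ts g)) as [Og|Og].
  { assert (Tg : T g = hzero) by (apply T_orth; auto).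
    rewrite Tx, Tg. replace (hsub x (hopp hzero)) with x.
    - replace (hnorm x / hnorm x) with 1 by (field; lra). auto.
    - apply vec_ext; intro w. rewrite ip_sub_l, ip_opp_l, ip_zero_l. ring. }
  set (a2 := hinner (T g) (T g)). set (c2 := hinner x x).
  assert (Key : forall z, Kset z -> a2 * c2 <= hinner (hsub g z) (hsub g z) * (c2 - a2)).
  { intros z Kz.
    assert (Tgz : T (hsub g z) = T g).
    { rewrite (proj_sub Ts T), (K_T z Kz); auto. apply vec_ext; intro w. rewrite ip_sub_l, ip_zero_l. ring. }
    assert (K1 := key_ineq x (hsub g z)).
    rewrite Tgz in K1. apply K1; auto.
    rewrite ip_sym. apply Ox. apply cs_sub; auto. apply Kz. }
  assert (a2pos : 0 < a2) by (apply ip_pos_of_ne, Tu_ne0; auto).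
  assert (c2pos : 0 < c2) by (apply ip_pos_of_ne; auto).
  assert (Nd : 0 < c2 - a2).
  { specialize (Key hzero K_zero).
    destruct (Rlt_or_le 0 (c2 - a2)) as [h|h]; auto.
    assert (0 <= hinner (hsub g hzero) (hsub g hzero)) by apply hinner_pos. nra. }
  set (N := sqrt (c2 - a2)).
  assert (NP : 0 < N) by (apply sqrt_lt_R0; auto).
  assert (NN : N * N = c2 - a2) by (apply sqrt_sqrt; lra).
  set (k := hnorm (T g) * hnorm x / N).
  assert (kd : k <= Defs.dist g Kset).
  { apply dist_ge. apply K_zero. intros z Kz. apply sqrt_le_of_sq; [apply hnorm_ge0|].
    rewrite hnorm_sq. specialize (Key z Kz).
    unfold k. replace (hnorm (T g) * hnorm x / N * (hnorm (T g) * hnorm x / N)) with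
      ((hnorm (T g) * hnorm (T g)) * (hnorm x * hnorm x) / (N * N)) by (field; lra).
    rewrite !hnorm_sq, NN. fold a2 c2.
    apply Rmult_le_reg_r with (c2 - a2); auto. unfold Rdiv. rewrite Rmult_assoc, Rinv_l; lra. }
  assert (GR := gam_ratio g Hn Sg Og). fold gam in GR.
  assert (Gk : gam * k <= hnorm (T g)).
  { eapply Rle_trans; [|exact GR]. apply Rmult_le_compat_l; auto. }
  assert (Nx : hnorm (hsub x (T x)) = N).
  { unfold hnorm, N. f_equal. rewrite Tcompl_ip. rewrite Tx, ip_opp_l, ip_opp_r. fold a2 c2. ring. }
  rewrite Nx.
  assert (PT := hnorm_pos _ (Tu_ne0 g Og)).
  unfold k in Gk.
  assert (gam * hnorm x <= N).
  { apply Rmult_le_reg_r with (hnorm (T g) / N).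
    { apply Rdiv_lt_0_compat; auto. }
    replace (N * (hnorm (T g) / N)) with (hnorm (T g)) by (field; lra).
    replace (gam * hnorm x * (hnorm (T g) / N)) with (gam * (hnorm (T g) * hnorm x / N)) by (field; lra).
    auto. }
  apply Rmult_le_reg_r with (hnorm x); auto. unfold Rdiv. rewrite Rmult_assoc, Rinv_l; lra.
Qed.

Definition ev (lam : R) (u : H) : H := hsub (A u) (hscal lam u).

Definition AE (lam : R) : Prop := forall eta, 0 < eta ->
  exists u, Ss u /\ 0 < hinner u u /\ hinner (ev lam u) (ev lam u) < eta * hinner u u.

Lemma spec_of_approx (F : H -> Prop) (Op : H -> H) lam : closed_subspace F -> (forall x, F x -> F (Op x)) ->
  (forall eta, 0 < eta -> exists u, F u /\ 0 < hinner u u /\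
     hinner (hsub (Op u) (hscal lam u)) (hsub (Op u) (hscal lam u)) < eta * hinner u u) ->
  in_spectrum_restr Op F lam.
Proof.
  intros CF FO Hap [B [FB [[C HC] [H1 H2]]]].
  destruct (Hap (/ (C * C + 1))) as [u [Fu [Pu Eu]]].
  { apply Rinv_0_lt_compat. nra. }
  set (e := hsub (Op u) (hscal lam u)) in *.
  assert (Fe : F e) by (apply cs_sub; auto; apply cs_scal; auto).
  assert (Be := HC e Fe). assert (Bu : B e = u) by exact (H1 u Fu). rewrite Bu in Be.
  assert (Nu := hnorm_pos u). assert (Ne := hnorm_ge0 e).
  assert (Nu' : 0 < hnorm u) by (apply Nu; intro E; rewrite E, ip_zero_l in Pu; lra).
  assert (Cp : 0 < C). { destruct (Rlt_or_le 0 C); auto. nra. }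
  assert (Sq : hnorm u * hnorm u <= C * C * (hnorm e * hnorm e)) by nra.
  rewrite !hnorm_sq in Sq.
  assert (h : C * C * hinner e e < C * C * (/ (C * C + 1) * hinner u u)) by (apply Rmult_lt_compat_l; nra).
  assert (h2 : C * C * (/ (C * C + 1) * hinner u u) = (C * C / (C * C + 1)) * hinner u u) by (field; nra).
  assert (h3 : C * C / (C * C + 1) < 1).
  { apply Rmult_lt_reg_r with (C * C + 1); [nra|]. unfold Rdiv. rewrite Rmult_assoc, Rinv_l; nra. }
  nra.
Qed.

Lemma spec_A lam : AE lam -> in_spectrum_restr (fun x => S (T x)) Ss lam.
Proof.
  intro Ha. apply spec_of_approx; [exact hSs|intros; apply A_in|].
  intros eta He. destruct (Ha eta He) as [u [Su [Pu Eu]]]. exists u. auto.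
Qed.

Lemma spec_B lam : AE lam -> 0 < lam -> in_spectrum_restr (fun x => T (S x)) Ts lam.
Proof.
  intros Ha Hl. apply spec_of_approx; [exact hTs|intros; apply T_in|].
  intros eta' He'.
  set (eta := Rmin (lam * lam / 4) (eta' * lam / 2)).
  assert (Ep : 0 < eta) by (apply Rmin_glb_lt; nra).
  destruct (Ha eta Ep) as [u [Su [Pu Eu]]].
  set (e := ev lam u) in *.
  exists (T u). split; [apply T_in|].
  assert (Ve : hsub (T (S (T u))) (hscal lam (T u)) = T e).
  { unfold e, ev, A. rewrite (proj_sub Ts T), (proj_scal Ts T); auto. }
  rewrite Ve.
  assert (Tu : hinner (T u) (T u) = lam * hinner u u + hinner e u).
  { rewrite <- A_ip; auto. unfold e, ev. rewrite ip_sub_l, ip_scal_l. ring. }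
  assert (CS := cauchy_schwarz e u).
  assert (E1 : eta <= lam * lam / 4) by apply Rmin_l.
  assert (E2 : eta <= eta' * lam / 2) by apply Rmin_r.
  assert (Eu2 : hinner e e * hinner u u < lam * lam / 4 * hinner u u * hinner u u).
  { assert (hinner e e * hinner u u < eta * hinner u u * hinner u u) by nra. nra. }
  assert (B1 : - (lam / 2 * hinner u u) < hinner e u).
  { apply Rnot_le_lt; intro h.
    assert (0 <= lam / 2 * hinner u u) by nra.
    assert ((lam / 2 * hinner u u) * (lam / 2 * hinner u u) <= hinner e u * hinner e u).
    { replace (hinner e u * hinner e u) with ((- hinner e u) * (- hinner e u)) by ring.
      apply Rmult_le_compat; lra. }
    nra. }
  assert (TP : lam / 2 * hinner u u < hinner (T u) (T u)) by lra.
  split; [nra|].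
  assert (Te := proj_ip_le Ts T hT e).
  assert (hinner e e < eta' * lam / 2 * hinner u u) by nra.
  assert (eta' * lam / 2 * hinner u u < eta' * hinner (T u) (T u)) by nra.
  lra.
Qed.

Lemma AE_unit lam : AE lam -> forall d, 0 < d -> exists v, Ss v /\ hinner v v = 1 /\ hinner (ev lam v) (ev lam v) < d.
Proof.
  intros Ha d Hd. destruct (Ha d Hd) as [u [Su [Pu Eu]]].
  set (s := / hnorm u).
  assert (Nu : 0 < hnorm u).
  { apply hnorm_pos. intro E. rewrite E, ip_zero_l in Pu. lra. }
  assert (ss : s * s * hinner u u = 1).
  { unfold s. rewrite <- hnorm_sq. field. lra. }
  exists (hscal s u). split; [apply cs_scal; auto|]. split.
  - rewrite ip_scal_l, ip_scal_r. rewrite <- ss. ring.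
  - assert (Ev : ev lam (hscal s u) = hscal s (ev lam u)).
    { unfold ev. rewrite A_scal. apply vec_ext; intro w. repeat (rewrite ip_sub_l || rewrite ip_scal_l). ring. }
    rewrite Ev, ip_scal_l, ip_scal_r.
    assert (0 < s * s) by (unfold s; apply Rmult_lt_0_compat; apply Rinv_0_lt_compat; auto).
    replace d with (s * s * (d * hinner u u)) by (transitivity (d * (s * s * hinner u u)); [ring|rewrite ss; ring]).
    rewrite <- Rmult_assoc. apply Rmult_lt_compat_l; auto.
Qed.

Lemma nu_le_sqrt lam : (exists r, nuset r) -> AE lam -> 0 < lam < 1 -> Rinf nuset <= sqrt lam.
Proof.
  intros Hne Ha Hl.
  assert (N0 := nu_ge0 Hne). assert (N1 := nu_le1 Hne).
  set (nu := Rinf nuset) in *.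
  apply Rnot_lt_le; intro Hlt.
  assert (Sl : sqrt lam * sqrt lam = lam) by (apply sqrt_sqrt; lra).
  assert (Sp := sqrt_pos lam).
  assert (Vg : lam < nu * nu) by nra.
  set (V := nu * nu) in *. set (D := V - lam).
  set (L := lam * (1 - lam)).
  assert (Lp : 0 < L) by (unfold L; nra).
  assert (V1 : V <= 1) by (unfold V; nra).
  set (dl := Rmin 1 (D * L / 20)).
  assert (dlp : 0 < dl) by (apply Rmin_glb_lt; [lra|]; unfold D; apply Rdiv_lt_0_compat; [nra|lra]).
  assert (dl1 : dl <= 1) by apply Rmin_l.
  assert (dl2 : dl <= D * L / 20) by apply Rmin_r.
  destruct (AE_unit lam Ha (dl * dl) ltac:(nra)) as [v [Sv [Vv Ev]]].
  set (e := ev lam v) in *.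
  assert (Av : A v = hadd e (hscal lam v)).
  { unfold e, ev. apply vec_ext; intro w. rewrite ip_add_l, ip_sub_l, !ip_scal_l. ring. }
  set (a1 := hinner e e) in *. set (a2 := hinner e (T e)). set (a3 := hinner e v). set (a4 := hinner e (T v)).
  set (p := hinner (T v) (T v)).
  assert (Hp : p = lam + a3).
  { unfold p. rewrite <- A_ip, Av; auto. rewrite ip_add_l, ip_scal_l, Vv. unfold a3. rewrite ip_sym. ring. }
  assert (p1 : p <= 1).
  { unfold p. rewrite <- Vv. apply (proj_ip_le Ts T hT). }
  assert (a1n : 0 <= a1) by apply hinner_pos.
  assert (B3 : a3 * a3 <= dl * dl).
  { assert (C := cauchy_schwarz e v). fold a1 a3 in C. rewrite Vv in C. lra. }
  assert (B4 : a4 * a4 <= dl * dl).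
  { assert (C := cauchy_schwarz e (T v)). fold a1 a4 p in C.
    assert (0 <= p) by apply hinner_pos. nra. }
  assert (A3 : - dl <= a3 <= dl).
  { split; apply Rnot_lt_le; intro h; nra. }
  assert (A4 : - dl <= a4 <= dl).
  { split; apply Rnot_lt_le; intro h; nra. }
  assert (A2 : 0 <= a2 <= a1).
  { unfold a2, a1. rewrite ip_sym, (T_ip e e). split; [apply hinner_pos|].
    apply (proj_ip_le Ts T hT). }
  set (y := hsub v (T v)).
  assert (Oy : orth_compl Ts y) by (apply (compl_in Ts T); auto).
  set (x := hsub y (S y)).
  assert (Ex : x = hadd e (hsub (hscal lam v) (T v))).
  { unfold x, y. rewrite (proj_sub Ss S), (Sfix v Sv); auto.
    change (S (T v)) with (A v). rewrite Av.
    apply vec_ext; intro w. repeat (rewrite ip_add_l || rewrite ip_sub_l || rewrite ip_scal_l). ring. }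
  assert (ETx : hsub x (T x) = hadd (hsub e (T e)) (hscal lam (hsub v (T v)))).
  { rewrite Ex. rewrite (proj_add Ts T), (proj_sub Ts T), (proj_scal Ts T), (proj_idem Ts T); auto.
    apply vec_ext; intro w. repeat (rewrite ip_add_l || rewrite ip_sub_l || rewrite ip_scal_l). ring. }
  assert (s1 : hinner v e = a3) by (unfold a3; apply ip_sym).
  assert (s2 : hinner (T v) e = a4) by (unfold a4; apply ip_sym).
  assert (s3 : hinner (T e) e = a2) by (unfold a2; apply ip_sym).
  assert (s4 : hinner v (T v) = p) by (unfold p; rewrite ip_sym; apply T_ip).
  assert (s5 : hinner (T v) v = p) by (unfold p; apply T_ip).
  assert (s6 : hinner (T e) v = a4) by (unfold a4; apply T_sa).
  assert (s7 : hinner v (T e) = a4) by (unfold a4; rewrite ip_sym; apply T_sa).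
  assert (s8 : hinner (T e) (T v) = a4) by (unfold a4; rewrite <- T_ip; apply T_sa).
  assert (s9 : hinner (T v) (T e) = a4) by (unfold a4; rewrite ip_sym, <- T_ip; apply T_sa).
  assert (s10 : hinner (T e) (T e) = a2) by (unfold a2; rewrite <- T_ip; apply ip_sym).
  assert (X2 : hinner x x = L + a1 + a3 - 2 * a4).
  { rewrite Ex. repeat (rewrite ip_add_l || rewrite ip_sub_l || rewrite ip_scal_l ||
                        rewrite ip_add_r || rewrite ip_sub_r || rewrite ip_scal_r).
    rewrite s1, s2, s4, s5, Vv. fold a1 a3 a4 p. rewrite Hp. unfold L. ring. }
  assert (Y2 : hinner (hsub x (T x)) (hsub x (T x)) = lam * L + a1 - a2 + 2 * lam * a3 - 2 * lam * a4 - lam * lam * a3).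
  { rewrite ETx. repeat (rewrite ip_add_l || rewrite ip_sub_l || rewrite ip_scal_l ||
                        rewrite ip_add_r || rewrite ip_sub_r || rewrite ip_scal_r).
    rewrite s1, s2, s3, s4, s5, s6, s7, s8, s9, s10, Vv. fold a1 a2 a3 a4 p. rewrite Hp. unfold L. ring. }
  assert (Xlb : L - 3 * dl <= hinner x x).
  { rewrite X2. assert (dl * dl <= dl) by nra. lra. }
  assert (Dl : D * L / 20 <= L / 20).
  { assert (D <= 1) by (unfold D; lra). assert (D * L <= L) by nra. lra. }
  assert (Xp : 0 < hinner x x) by lra.
  assert (Yub : hinner (hsub x (T x)) (hsub x (T x)) <= lam * L + 6 * dl).
  { rewrite Y2. assert (dl * dl <= dl) by nra.
    assert (lam * a3 <= dl) by nra. assert (- (lam * a4) <= dl) by nra.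
    assert (- (lam * lam * a3) <= dl) by (assert (0 < lam * lam) by nra; assert (lam * lam <= 1) by nra; nra).
    lra. }
  assert (Hx : x <> hzero).
  { intro E. rewrite E, ip_zero_l in Xp. lra. }
  assert (Inx : nuset (hnorm (hsub x (T x)) / hnorm x)).
  { exists x. split; [exists y; split; auto|]. split; auto. }
  assert (Le := Rinf_le nuset _ Inx nuset_lb). fold nu in Le.
  assert (Px := hnorm_pos x Hx).
  assert (Le2 : nu * hnorm x <= hnorm (hsub x (T x))).
  { apply Rmult_le_reg_r with (/ hnorm x). { apply Rinv_0_lt_compat; auto. }
    rewrite Rmult_assoc, Rinv_r, Rmult_1_r; [|lra]. exact Le. }
  assert (Sq : V * hinner x x <= hinner (hsub x (T x)) (hsub x (T x))).
  { rewrite <- !hnorm_sq. unfold V.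
    assert (0 <= nu * hnorm x) by (apply Rmult_le_pos; lra).
    assert (nu * hnorm x * (nu * hnorm x) <= hnorm (hsub x (T x)) * hnorm (hsub x (T x))).
    { apply Rmult_le_compat; lra. }
    nra. }
  assert (W1 : V * (L - 3 * dl) <= V * hinner x x) by (apply Rmult_le_compat_l; lra).
  assert (W2 : V * dl <= dl) by nra.
  assert (W3 : V * L = lam * L + D * L) by (unfold D; ring).
  assert (W4 : D * L <= 9 * dl) by lra.
  assert (0 < D * L) by (unfold D; nra).
  lra.
Qed.

Lemma HC_gam : NS -> HC (gamma Ss (orth_compl Ts) * gamma Ss (orth_compl Ts)).
Proof.
  intros Hn u Su. set (gam := gamma Ss (orth_compl Ts)).
  assert (G := gam_M (A u) Hn (A_Mp u)). fold gam in G.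
  assert (G0 := gam_ge0 Hn). fold gam in G0.
  rewrite (A_ip (A u) (A_in u)).
  rewrite <- !hnorm_sq.
  assert (0 <= gam * hnorm (A u)) by (apply Rmult_le_pos; auto; apply hnorm_ge0).
  assert (gam * hnorm (A u) * (gam * hnorm (A u)) <= hnorm (T (A u)) * hnorm (T (A u))).
  { apply Rmult_le_compat; auto. }
  nra.
Qed.

Lemma gamM_sq x : NS -> Mp x -> gamma Ss (orth_compl Ts) * gamma Ss (orth_compl Ts) * hinner x x <= hinner (T x) (T x).
Proof.
  intros Hn Mx. set (gam := gamma Ss (orth_compl Ts)).
  assert (G := gam_M x Hn Mx). fold gam in G.
  assert (G0 := gam_ge0 Hn). fold gam in G0.
  rewrite <- !hnorm_sq.
  assert (0 <= gam * hnorm x) by (apply Rmult_le_pos; auto; apply hnorm_ge0).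
  assert (gam * hnorm x * (gam * hnorm x) <= hnorm (T x) * hnorm (T x)).
  { apply Rmult_le_compat; auto. }
  nra.
Qed.

Lemma decomp_gam g : NS -> 0 < gamma Ss (orth_compl Ts) -> Ss g -> exists z, Kset z /\ Mp (hsub g z).
Proof.
  intros Hn Gp Sg. set (gam := gamma Ss (orth_compl Ts)) in *.
  assert (G1 := gam_le1 Hn). fold gam in G1.
  destruct (decomp (gam * gam) g) as [z [Kz [Mz _]]]; eauto.
  - split; nra.
  - apply HC_gam; auto.
Qed.

Lemma Tx_le x : hinner (T x) (T x) <= hinner x x.
Proof. apply (proj_ip_le Ts T hT). Qed.

Lemma AE_gam : NS -> 0 < gamma Ss (orth_compl Ts) -> AE (gamma Ss (orth_compl Ts) * gamma Ss (orth_compl Ts)).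
Proof.
  intros Hn Gp eta He. set (gam := gamma Ss (orth_compl Ts)) in *.
  assert (G1 := gam_le1 Hn). fold gam in G1.
  set (dl := Rmin 1 (eta / (2 * gam + 2))).
  assert (dlp : 0 < dl) by (apply Rmin_glb_lt; [lra|apply Rdiv_lt_0_compat; lra]).
  assert (dl1 : dl <= 1) by apply Rmin_l.
  assert (dl2 : dl <= eta / (2 * gam + 2)) by apply Rmin_r.
  destruct (gam_approx dl Hn dlp) as [g [Sg [Ng Hg]]]. fold gam in Hg.
  destruct (decomp_gam g Hn Gp Sg) as [z [Kz Mv]].
  set (v := hsub g z) in *.
  assert (Tv : T v = T g).
  { unfold v. rewrite (proj_sub Ts T), (K_T z Kz); auto. apply vec_ext; intro w. rewrite ip_sub_l, ip_zero_l. ring. }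
  assert (Dv : Defs.dist g Kset <= hnorm v) by (apply dist_le; auto).
  assert (Nt := hnorm_pos _ (Tu_ne0 g Ng)).
  assert (Hv : hnorm (T v) < (gam + dl) * hnorm v).
  { rewrite Tv. eapply Rlt_le_trans; [exact Hg|]. apply Rmult_le_compat_l; lra. }
  assert (Nv := hnorm_ge0 v).
  assert (Vp : 0 < hinner v v).
  { rewrite <- hnorm_sq. assert (0 < hnorm v) by (assert (0 <= hnorm (T v)) by apply hnorm_ge0; nra). nra. }
  assert (Hv2 : hinner (T v) (T v) <= (gam + dl) * (gam + dl) * hinner v v).
  { rewrite <- !hnorm_sq. assert (0 <= hnorm (T v)) by apply hnorm_ge0.
    assert (hnorm (T v) * hnorm (T v) <= ((gam + dl) * hnorm v) * ((gam + dl) * hnorm v)).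
    { apply Rmult_le_compat; lra. }
    nra. }
  exists v. split; [apply Mv|]. split; auto.
  assert (Eq : ev (gam * gam) v = Q2 (- (gam * gam)) 1 0 v).
  { unfold ev, Q2. apply vec_ext; intro w. repeat (rewrite ip_add_l || rewrite ip_sub_l || rewrite ip_scal_l). ring. }
  rewrite Eq.
  assert (Pos := Q2_pos_M (- (gam * gam)) 1 0 1 ltac:(lra)).
  assert (Form : forall x, Mp x -> hinner (Q2 (- (gam * gam)) 1 0 x) x = hinner (T x) (T x) - gam * gam * hinner x x).
  { intros x Mx. rewrite Q2_form by apply Mx. rewrite A_ip by apply Mx. ring. }
  assert (P1 : forall x, Mp x -> 0 <= hinner (Q2 (- (gam * gam)) 1 0 x) x).
  { intros x Mx. rewrite Form; auto. assert (h := gamM_sq x Hn Mx). fold gam in h. lra. }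
  assert (P2 : forall x, Mp x -> hinner (Q2 (- (gam * gam)) 1 0 x) x <= 1 * hinner x x).
  { intros x Mx. rewrite Form; auto. assert (h := Tx_le x). assert (0 <= hinner x x) by apply hinner_pos. nra. }
  specialize (Pos P1 P2 v Mv).
  rewrite Form in Pos; auto.
  assert (dl * (2 * gam + 2) <= eta).
  { apply Rmult_le_reg_r with (/ (2 * gam + 2)). { apply Rinv_0_lt_compat; lra. }
    rewrite Rmult_assoc, Rinv_r; lra. }
  assert ((gam + dl) * (gam + dl) - gam * gam <= dl * (2 * gam + 2)) by nra.
  assert (((gam + dl) * (gam + dl) - gam * gam) * hinner v v < eta * hinner v v).
  { apply Rmult_lt_compat_r; auto. nra. }
  nra.
Qed.

Lemma unit_in_S : NS -> exists v, Ss v /\ hinner v v = 1.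
Proof.
  intro Hn. apply not_all_ex_not in Hn. destruct Hn as [g Hg].
  apply imply_to_and in Hg. destruct Hg as [Sg Ng].
  assert (Hg : g <> hzero).
  { intro E. apply Ng. rewrite E. apply (cs_zero _ (orth_compl_closed Ts)). }
  assert (P := hnorm_pos g Hg).
  exists (hscal (/ hnorm g) g). split; [apply cs_scal; auto|].
  rewrite ip_scal_l, ip_scal_r, <- hnorm_sq. field. lra.
Qed.

Lemma logconv u : Ss u -> hinner (A u) (A u) * hinner (A u) (A u) <= hinner (A u) u * hinner (A (A u)) (A u).
Proof.
  intro Su. apply quad_disc. { rewrite A_ip by apply A_in. apply hinner_pos. }
  intro t. assert (Sx : Ss (hadd u (hscal t (A u)))) by (apply S_lin; auto; apply A_in).
  assert (E := hinner_pos _ (T (hadd u (hscal t (A u))))).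
  rewrite <- (A_ip _ Sx) in E. rewrite A_add, A_scal in E.
  rewrite ip_add_l, !ip_add_r, !ip_scal_l, !ip_scal_r in E.
  rewrite (A_sa (A u) u) in E by (auto; apply A_in).
  nra.
Qed.

Lemma ev_ev r1 r2 x : ev r1 (ev r2 x) = Q2 (r1 * r2) (- (r1 + r2)) 1 x.
Proof.
  unfold ev, Q2. rewrite A_sub, A_scal. apply vec_ext; intro w.
  repeat (rewrite ip_add_l || rewrite ip_sub_l || rewrite ip_scal_l). ring.
Qed.

Lemma ev_in lam x : Ss x -> Ss (ev lam x).
Proof. intro Sx. unfold ev. apply cs_sub; auto. apply A_in. apply cs_scal; auto. Qed.

Lemma AE_small c : NS -> gamma Ss (orth_compl Ts) = 0 -> 0 < c <= 1/2 -> exists lam, 0 < lam < c /\ AE lam.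
Proof.
  intros Hn G0 Hc.
  set (qset := fun r => exists v, Ss v /\ hinner v v = 1 /\ r = hinner (A v) (A v) - c * hinner (A v) v).
  assert (qlb : forall r, qset r -> - (c * c / 4) <= r).
  { intros r [v [Sv [Vv ->]]].
    assert (E := hinner_pos _ (hsub (A v) (hscal (c / 2) v))).
    rewrite !ip_sub_l, !ip_sub_r, !ip_scal_l, !ip_scal_r, Vv, (ip_sym v (A v)) in E. nra. }
  assert (qne : exists r, qset r).
  { destruct (unit_in_S Hn) as [v [Sv Vv]]. eexists; exists v; eauto. }
  set (m := Rinf qset).
  assert (mlb : - (c * c / 4) <= m) by (apply Rinf_ge; auto).
  assert (Hom : forall x, Ss x -> m * hinner x x <= hinner (A x) (A x) - c * hinner (A x) x).
  { intros x Sx. destruct (Req_dec (hinner x x) 0) as [Z|Z].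
    - assert (x = hzero) by (apply hinner_def; auto). subst x.
      assert (A0 : A hzero = hzero) by (apply A_K, K_zero). rewrite A0, !ip_zero_l. lra.
    - assert (Xp : 0 < hinner x x) by (generalize (hinner_pos _ x); lra).
      assert (Np : 0 < hnorm x) by (apply hnorm_pos; intro E; apply Z; rewrite E; apply ip_zero_l).
      set (s := / hnorm x).
      assert (ss : s * s * hinner x x = 1) by (unfold s; rewrite <- hnorm_sq; field; lra).
      assert (Q : qset (hinner (A (hscal s x)) (A (hscal s x)) - c * hinner (A (hscal s x)) (hscal s x))).
      { exists (hscal s x). split; [apply cs_scal; auto|]. split; auto.
        rewrite ip_scal_l, ip_scal_r. rewrite <- ss. ring. }
      assert (L := Rinf_le qset _ Q (ex_intro _ _ qlb)). fold m in L.
      rewrite A_scal, !ip_scal_l, !ip_scal_r in L.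
      assert (0 < s * s) by (unfold s; apply Rmult_lt_0_compat; apply Rinv_0_lt_compat; auto).
      assert (h : s * (s * hinner (A x) (A x)) - c * (s * (s * hinner (A x) x)) = s * s * (hinner (A x) (A x) - c * hinner (A x) x)) by ring.
      rewrite h in L.
      set (Y := hinner (A x) (A x) - c * hinner (A x) x) in *.
      assert (0 <= (s * s * Y - m) * hinner x x) by (apply Rmult_le_pos; lra).
      assert (s * s * Y * hinner x x = Y) by (transitivity (Y * (s * s * hinner x x)); [ring|rewrite ss; ring]).
      nra. }
  destruct (Rle_or_lt 0 m) as [Hm|Hm].
  - (* contradiction: gamma would be positive *)
    exfalso.
    assert (Hc2 : forall w, Ss w -> c * hinner (A w) w <= hinner (A w) (A w)).
    { intros w Sw. specialize (Hom w Sw). assert (0 <= m * hinner w w) by (apply Rmult_le_pos; auto; apply hinner_pos). lra. }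
    assert (HCc : HC c).
    { intros u Su. assert (L := logconv u Su). assert (C2 := Hc2 u Su).
      assert (a1 := A_ip u Su). assert (P1 := hinner_pos _ (T u)).
      destruct (Req_dec (hinner (A u) u) 0) as [Z|Z].
      - assert (hinner (A u) (A u) <= 0) by (generalize (A_sq_le u Su); lra).
        assert (Z2 : hinner (A u) (A u) = 0) by (generalize (hinner_pos _ (A u)); lra).
        rewrite Z2, Rmult_0_r. rewrite (A_ip _ (A_in u)). apply hinner_pos.
      - assert (0 < hinner (A u) u) by lra.
        assert (a2p := hinner_pos _ (A u)).
        assert (c * hinner (A u) u * hinner (A u) (A u) <= hinner (A u) (A u) * hinner (A u) (A u)) by (apply Rmult_le_compat_r; lra).
        assert (0 <= hinner (A u) u * (hinner (A (A u)) (A u) - c * hinner (A u) (A u))) by nra.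
        apply Rmult_le_reg_l with (hinner (A u) u); [lra|]. nra. }
    set (q := sqrt (1 - c)).
    assert (q1 : q < 1).
    { unfold q. assert (h := sqrt_lt_1_alt (1 - c) 1 ltac:(lra)). rewrite sqrt_1 in h. exact h. }
    assert (Gq : 1 - q <= gamma Ss (orth_compl Ts)).
    { rewrite gamma_eq; auto. apply Rinf_ge; [apply gset_ne; auto|].
      intros r [g [Sg [Ng ->]]]. rewrite dist_T. fold Kset.
      destruct (decomp c g ltac:(lra) HCc Sg) as [z [Kz [_ Bz]]].
      fold q in Bz.
      assert (D1 := dist_le g Kset z Kz).
      assert (AT : hnorm (A g) <= hnorm (T g)) by (apply (proj_norm_le Ss S); auto).
      assert (DP := distK_pos g Ng).
      apply Rmult_le_reg_r with (Defs.dist g Kset); auto.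
      unfold Rdiv. rewrite Rmult_assoc, Rinv_l, Rmult_1_r by lra.
      assert (hnorm (hsub g z) * (1 - q) <= hnorm (A g)).
      { apply Rmult_le_reg_r with (/ (1 - q)). { apply Rinv_0_lt_compat; lra. }
        rewrite Rmult_assoc, Rinv_r, Rmult_1_r by lra. exact Bz. }
      nra. }
    lra.
  - (* m < 0 : factor *)
    set (sq := sqrt (c * c + 4 * m)).
    assert (sq0 : 0 <= sq) by apply sqrt_pos.
    assert (sqq : sq * sq = c * c + 4 * m) by (apply sqrt_sqrt; nra).
    assert (sqc : sq < c) by nra.
    set (r1 := (c - sq) / 2). set (r2 := (c + sq) / 2).
    assert (E1 : r1 * r2 = - m) by (unfold r1, r2; nra).
    assert (E2 : r1 + r2 = c) by (unfold r1, r2; field).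
    set (Qo := Q2 (- m) (- c) 1).
    assert (QE : forall x, ev r1 (ev r2 x) = Qo x).
    { intro x. rewrite ev_ev. unfold Qo. rewrite E1, E2. reflexivity. }
    assert (Form : forall x, Ss x -> hinner (Qo x) x = hinner (A x) (A x) - c * hinner (A x) x - m * hinner x x).
    { intros x Sx. unfold Qo. rewrite Q2_form; auto. ring. }
    assert (Pos := Q2_pos_S (- m) (- c) 1 2 ltac:(lra)).
    fold Qo in Pos.
    assert (P1 : forall x, Ss x -> 0 <= hinner (Qo x) x).
    { intros x Sx. rewrite Form; auto. specialize (Hom x Sx). lra. }
    assert (P2 : forall x, Ss x -> hinner (Qo x) x <= 2 * hinner x x).
    { intros x Sx. rewrite Form; auto.
      assert (h1 := A_sq_le x Sx). assert (h2 := A_ip x Sx). assert (h3 := Tx_le x).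
      assert (h4 := hinner_pos _ (T x)). assert (h5 := hinner_pos _ x).
      assert (0 <= c * hinner (A x) x) by nra. assert (c * c <= 1/4) by nra.
      assert (0 <= (1 + m) * hinner x x) by (apply Rmult_le_pos; lra). lra. }
    specialize (Pos P1 P2).
    assert (AQ : forall eta, 0 < eta -> exists v, Ss v /\ hinner v v = 1 /\ hinner (Qo v) (Qo v) < eta).
    { intros eta He. destruct (Rinf_approx qset (eta / 2) qne (ex_intro _ _ qlb) ltac:(lra)) as [r [[v [Sv [Vv ->]]] Hr]].
      fold m in Hr. exists v. split; auto. split; auto.
      specialize (Pos v Sv). rewrite Form in Pos; auto. rewrite Vv in Pos. lra. }
    assert (r1p : 0 < r1) by (unfold r1; lra).
    assert (r2c : r2 < c) by (unfold r2; lra).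
    destruct (classic (AE r2)) as [A2|A2].
    + exists r2. split; [split; unfold r2; lra|auto].
    + exists r1. split; [split; unfold r1; lra|].
      unfold AE in A2. apply not_all_ex_not in A2. destruct A2 as [e0 A2].
      apply imply_to_and in A2. destruct A2 as [e0p A2].
      intros eta He.
      destruct (AQ (eta * e0)) as [v [Sv [Vv Qv]]]. { nra. }
      exists (ev r2 v). split; [apply ev_in; auto|].
      assert (Lb : e0 * hinner v v <= hinner (ev r2 v) (ev r2 v)).
      { apply Rnot_lt_le; intro h. apply A2. exists v. split; auto. split; auto. lra. }
      rewrite Vv in Lb. split; [lra|]. rewrite QE. nra.
Qed.

Lemma fixed_point (F : H -> Prop) (K : H -> H) q w : closed_subspace F -> 0 <= q < 1 ->
  (forall x, F x -> F (K x)) -> (forall x y, K (hsub x y) = hsub (K x) (K y)) ->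
  (forall x, F x -> hnorm (K x) <= q * hnorm x) -> F w ->
  exists s, F s /\ s = hadd w (K s).
Proof.
  intros CF Hq FK Kl Kb Fw.
  set (f := fun x => hadd w (K x)).
  set (u := fun n => Nat.iter n f hzero).
  assert (uS : forall n : nat, u (Datatypes.S n) = f (u n)) by reflexivity.
  assert (Fu : forall n : nat, F (u n)).
  { induction n. exact (cs_zero F CF). rewrite uS. unfold f. apply cs_add; auto. }
  assert (K0 : K hzero = hzero).
  { assert (h := Kl hzero hzero). rewrite (hsub_self hzero) in h. rewrite (hsub_self (K hzero)) in h. exact h. }
  assert (Step : forall n : nat, hnorm (hsub (u (Datatypes.S n)) (u n)) <= hnorm w * q ^ n).
  { induction n.
    - simpl. unfold f. rewrite K0. replace (hsub (hadd w hzero) hzero) with w. lra.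
      apply vec_ext; intro v. rewrite ip_sub_l, ip_add_l, !ip_zero_l. ring.
    - rewrite (uS (Datatypes.S n)), (uS n). unfold f.
      replace (hsub (hadd w (K (hadd w (K (u n))))) (hadd w (K (u n)))) with (K (hsub (hadd w (K (u n))) (u n))).
      + fold (f (u n)). rewrite <- uS. eapply Rle_trans; [apply Kb; apply cs_sub; auto|].
        change (q ^ Datatypes.S n) with (q * q ^ n).
        replace (hnorm w * (q * q ^ n)) with (q * (hnorm w * q ^ n)) by ring.
        apply Rmult_le_compat_l; [lra|auto].
      + rewrite Kl. apply vec_ext; intro v. rewrite !ip_sub_l, !ip_add_l. ring. }
  destruct (geom_conv u _ _ Hq Step) as [s [Ls _]].
  assert (Fs : F s) by (eapply seq_lim_closed; eauto).
  exists s. split; auto.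
  assert (L1 := seq_lim_shift u s Ls).
  assert (L2 : seq_lim (fun n => f (u n)) (f s)).
  { apply (seq_lim_lip F f q); auto; [lra|].
    intros x y Fx Fy. unfold f. replace (hsub (hadd w (K x)) (hadd w (K y))) with (K (hsub x y)).
    - apply Kb, cs_sub; auto.
    - rewrite Kl. apply vec_ext; intro v. rewrite !ip_sub_l, !ip_add_l. ring. }
  apply (seq_lim_unique (fun n => u (Datatypes.S n))); auto.
Qed.

Lemma decomp_unique g z1 z2 : Kset z1 -> Kset z2 -> Mp (hsub g z1) -> Mp (hsub g z2) -> z1 = z2.
Proof.
  intros K1 K2 M1 M2. apply hsub_eq0, hinner_def.
  assert (Kd : Kset (hsub z1 z2)) by (apply cs_sub; auto; apply K_closed).
  assert (E1 := proj2 M1 _ Kd). assert (E2 := proj2 M2 _ Kd).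
  rewrite !ip_sub_r in E1, E2 |- *. rewrite !ip_sub_l in E1, E2 |- *. lra.
Qed.

Lemma ev_lin lam x y t : ev lam (hadd x (hscal t y)) = hadd (ev lam x) (hscal t (ev lam y)).
Proof.
  unfold ev. rewrite A_add, A_scal. apply vec_ext; intro w.
  repeat (rewrite ip_add_l || rewrite ip_sub_l || rewrite ip_scal_l). ring.
Qed.

Lemma ev_lower lam s : NS -> lam < gamma Ss (orth_compl Ts) * gamma Ss (orth_compl Ts) -> Mp s ->
  (gamma Ss (orth_compl Ts) * gamma Ss (orth_compl Ts) - lam) * hnorm s <= hnorm (ev lam s).
Proof.
  intros Hn Hl Ms. set (g2 := gamma Ss (orth_compl Ts) * gamma Ss (orth_compl Ts)) in *.
  assert (G := gamM_sq s Hn Ms). fold g2 in G.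
  assert (E : hinner (ev lam s) s = hinner (T s) (T s) - lam * hinner s s).
  { unfold ev. rewrite ip_sub_l, ip_scal_l, A_ip by apply Ms. reflexivity. }
  assert (C := cs_le (ev lam s) s).
  rewrite <- (hnorm_sq s), <- (hnorm_sq (T s)) in E, G.
  assert (N := hnorm_ge0 s). assert (N2 := hnorm_ge0 (ev lam s)).
  destruct N as [N|N].
  - apply Rmult_le_reg_r with (hnorm s); auto. nra.
  - rewrite <- N. lra.
Qed.

Lemma not_spec_small lam : NS -> 0 < lam < gamma Ss (orth_compl Ts) * gamma Ss (orth_compl Ts) ->
  ~ in_spectrum_restr (fun x => S (T x)) Ss lam.
Proof.
  intros Hn Hl. set (gam := gamma Ss (orth_compl Ts)) in *.
  assert (G0 := gam_ge0 Hn). assert (G1 := gam_le1 Hn). fold gam in G0, G1.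
  assert (Gp : 0 < gam) by (destruct G0 as [h|h]; auto; rewrite <- h in Hl; lra).
  set (g2 := gam * gam) in *.
  assert (g21 : g2 <= 1) by (unfold g2; nra).
  assert (Zex : forall g, exists z, Ss g -> Kset z /\ Mp (hsub g z)).
  { intro g. destruct (classic (Ss g)) as [Sg|Sg].
    - destruct (decomp_gam g Hn Gp Sg) as [z Hz]. exists z; auto.
    - exists hzero; intro; contradiction. }
  set (Z := fun g => proj1_sig (constructive_indefinite_description _ (Zex g))).
  assert (ZP : forall g, Ss g -> Kset (Z g) /\ Mp (hsub g (Z g))).
  { intros g Sg. unfold Z. destruct constructive_indefinite_description as [z Hz]. simpl; auto. }
  set (Kop := fun x => hscal (/ (1 - lam)) (hsub x (A x))).
  set (q := (1 - g2) / (1 - lam)).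
  assert (Hq : 0 <= q < 1).
  { unfold q. split; [apply Rmult_le_pos; [lra|apply Rlt_le, Rinv_0_lt_compat; lra]|].
    apply Rmult_lt_reg_r with (1 - lam); [lra|]. unfold Rdiv. rewrite Rmult_assoc, Rinv_l; lra. }
  assert (Pb : forall x, Mp x -> hinner (hsub x (A x)) (hsub x (A x)) <= (1 - g2) * (1 - g2) * hinner x x).
  { intros x Mx.
    assert (Eq : forall y, hsub y (A y) = Q2 1 (-1) 0 y).
    { intro y. unfold Q2. apply vec_ext; intro w. repeat (rewrite ip_add_l || rewrite ip_sub_l || rewrite ip_scal_l). ring. }
    rewrite Eq.
    assert (Form : forall y, Mp y -> hinner (Q2 1 (-1) 0 y) y = hinner y y - hinner (T y) (T y)).
    { intros y My. rewrite Q2_form by apply My. rewrite A_ip by apply My. ring. }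
    assert (P1 : forall y, Mp y -> 0 <= hinner (Q2 1 (-1) 0 y) y).
    { intros y My. rewrite Form; auto. generalize (Tx_le y). lra. }
    assert (P2 : forall y, Mp y -> hinner (Q2 1 (-1) 0 y) y <= (1 - g2) * hinner y y).
    { intros y My. rewrite Form; auto. assert (h := gamM_sq y Hn My). fold gam g2 in h. lra. }
    assert (Pos := Q2_pos_M 1 (-1) 0 (1 - g2) ltac:(lra) P1 P2 x Mx).
    assert (h := P2 x Mx). assert (0 <= 1 - g2) by lra. nra. }
  assert (Kb : forall x, Mp x -> hnorm (Kop x) <= q * hnorm x).
  { intros x Mx. unfold Kop. apply hnorm_le_iff. { apply Rmult_le_pos; [lra|apply hnorm_ge0]. }
    rewrite ip_scal_l, ip_scal_r.
    specialize (Pb x Mx). rewrite <- (hnorm_sq x) in Pb.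
    assert (0 < / (1 - lam)) by (apply Rinv_0_lt_compat; lra).
    replace (q * hnorm x * (q * hnorm x)) with
      (/ (1 - lam) * (/ (1 - lam) * ((1 - g2) * (1 - g2) * (hnorm x * hnorm x)))) by (unfold q, Rdiv; ring).
    apply Rmult_le_compat_l; [lra|]. apply Rmult_le_compat_l; [lra|]. exact Pb. }
  assert (Solex : forall w, exists s, Mp w -> Mp s /\ ev lam s = w).
  { intro w. destruct (classic (Mp w)) as [Mw|Mw]; [|exists hzero; intro; contradiction].
    assert (Mw' : Mp (hscal (/ (1 - lam)) w)) by (apply cs_scal; auto; apply Mp_closed).
    assert (FK : forall x, Mp x -> Mp (Kop x)).
    { intros x Mx. unfold Kop. apply cs_scal; [apply Mp_closed|]. apply cs_sub; [apply Mp_closed|auto|apply A_Mp]. }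
    assert (KL : forall x y, Kop (hsub x y) = hsub (Kop x) (Kop y)).
    { intros x y. unfold Kop. rewrite A_sub. apply vec_ext; intro v.
      repeat (rewrite ip_add_l || rewrite ip_sub_l || rewrite ip_scal_l). ring. }
    destruct (fixed_point Mp Kop q (hscal (/ (1 - lam)) w) Mp_closed Hq FK KL Kb Mw') as [s [Ms Es]].
    { exists s. intros _. split; auto.
      apply vec_ext; intro v.
      assert (E := f_equal (fun t => hinner t v) Es). simpl in E.
      unfold Kop in E. unfold ev.
      repeat (rewrite ip_add_l in E || rewrite ip_sub_l in E || rewrite ip_scal_l in E).
      rewrite ip_sub_l, ip_scal_l.
      apply Rmult_eq_reg_l with (/ (1 - lam)). 2:{ apply Rinv_neq_0_compat; lra. }
      assert (h : / (1 - lam) * (1 - lam) = 1) by (field; lra).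
      set (i := / (1 - lam)) in *.
      assert (h2 : i * lam = i - 1) by lra.
      transitivity (hinner s v - i * hinner s v + i * hinner (A s) v).
      + replace (i * (hinner (A s) v - lam * hinner s v)) with (i * hinner (A s) v - (i * lam) * hinner s v) by ring.
        rewrite h2. ring.
      + rewrite E at 1. ring. } }
  set (Sol := fun w => proj1_sig (constructive_indefinite_description _ (Solex w))).
  assert (SP : forall w, Mp w -> Mp (Sol w) /\ ev lam (Sol w) = w).
  { intros w Mw. unfold Sol. destruct constructive_indefinite_description as [s Hs]. simpl; auto. }
  assert (Inj : forall s1 s2, Mp s1 -> Mp s2 -> ev lam s1 = ev lam s2 -> s1 = s2).
  { intros s1 s2 M1 M2 E. apply hsub_eq0, hnorm_eq0.
    assert (Md : Mp (hsub s1 s2)) by (apply cs_sub; auto; apply Mp_closed).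
    assert (L := ev_lower lam _ Hn ltac:(fold gam g2; lra) Md). fold gam g2 in L.
    assert (Ed : ev lam (hsub s1 s2) = hzero).
    { unfold hsub at 1. rewrite hopp_scal. rewrite ev_lin, E. apply vec_ext; intro v.
      rewrite ip_add_l, ip_scal_l, ip_zero_l. ring. }
    rewrite Ed, hnorm_zero in L. assert (N := hnorm_ge0 (hsub s1 s2)).
    apply Rle_antisym; auto. apply Rmult_le_reg_l with (g2 - lam); lra. }
  set (R := fun u => hadd (hscal (- / lam) (Z u)) (Sol (hsub u (Z u)))).
  intro Sp. apply Sp. exists R.
  assert (Ku : forall u, Ss u -> Kset (Z u)) by (intros u Su; apply ZP; auto).
  assert (Mu : forall u, Ss u -> Mp (hsub u (Z u))) by (intros u Su; apply ZP; auto).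
  split; [|split; [|split]].
  - intros u Su. unfold R. apply cs_add; auto. apply cs_scal; auto. apply Ku; auto.
    apply SP; auto.
  - exists (/ lam + / (g2 - lam)). intros u Su.
    set (z := Z u) in *. set (v := hsub u z) in *.
    assert (Kz := Ku u Su). assert (Mv := Mu u Su).
    assert (Orth : hinner u u = hinner z z + hinner v v).
    { assert (O : hinner v z = 0) by exact (proj2 Mv z Kz).
      replace u with (hadd z v) at 1 2.
      - rewrite ip_add_l, !ip_add_r. rewrite (ip_sym z v), O. ring.
      - unfold v. apply vec_ext; intro w. rewrite ip_add_l, ip_sub_l. ring. }
    assert (Nz : hnorm z <= hnorm u) by (apply hnorm_le_of_ip; generalize (hinner_pos _ v); lra).
    assert (Nv : hnorm v <= hnorm u) by (apply hnorm_le_of_ip; generalize (hinner_pos _ z); lra).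
    destruct (SP v Mv) as [Ms Es].
    assert (L := ev_lower lam _ Hn ltac:(fold gam g2; lra) Ms). fold gam g2 in L. rewrite Es in L.
    unfold R. fold z v.
    eapply Rle_trans; [apply hnorm_triangle|].
    rewrite hnorm_scal. rewrite Rabs_left by (assert (0 < / lam) by (apply Rinv_0_lt_compat; lra); lra).
    rewrite Ropp_involutive.
    assert (S1 : hnorm (Sol v) <= / (g2 - lam) * hnorm u).
    { apply Rmult_le_reg_l with (g2 - lam); [lra|]. rewrite <- Rmult_assoc, Rinv_r, Rmult_1_l by lra. lra. }
    assert (S2 : / lam * hnorm z <= / lam * hnorm u) by (apply Rmult_le_compat_l; [apply Rlt_le, Rinv_0_lt_compat; lra|auto]).
    lra.
  - intros u Su. change (hsub (S (T u)) (hscal lam u)) with (ev lam u).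
    set (z := Z u). set (v := hsub u z).
    assert (Kz := Ku u Su). assert (Mv := Mu u Su). fold z v in Mv.
    assert (Ee : ev lam u = hadd (hscal (- lam) z) (ev lam v)).
    { unfold v, ev. rewrite A_sub, (A_K z Kz). apply vec_ext; intro w.
      repeat (rewrite ip_add_l || rewrite ip_sub_l || rewrite ip_scal_l). rewrite ip_zero_l. ring. }
    assert (Se : Ss (ev lam u)) by (apply ev_in; auto).
    assert (Ze : Z (ev lam u) = hscal (- lam) z).
    { apply (decomp_unique (ev lam u)); [apply Ku; auto| |apply Mu; auto|].
      - apply cs_scal; auto; apply K_closed.
      - replace (hsub (ev lam u) (hscal (- lam) z)) with (ev lam v).
        + unfold ev. apply cs_sub; [apply Mp_closed|apply A_Mp|apply cs_scal; auto; apply Mp_closed].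
        + rewrite Ee. apply vec_ext; intro w. rewrite ip_sub_l, ip_add_l. ring. }
    unfold R. rewrite Ze.
    assert (Ve : hsub (ev lam u) (hscal (- lam) z) = ev lam v).
    { rewrite Ee. apply vec_ext; intro w. rewrite ip_sub_l, ip_add_l. ring. }
    rewrite Ve.
    destruct (SP (ev lam v)) as [Ms Es].
    { unfold ev. apply cs_sub; [apply Mp_closed|apply A_Mp|apply cs_scal; auto; apply Mp_closed]. }
    assert (Sv : Sol (ev lam v) = v) by (apply Inj; auto).
    rewrite Sv. unfold v. apply vec_ext; intro w.
    repeat (rewrite ip_add_l || rewrite ip_sub_l || rewrite ip_scal_l). field. lra.
  - intros u Su. change (hsub (S (T (R u))) (hscal lam (R u))) with (ev lam (R u)).
    set (z := Z u). set (v := hsub u z).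
    assert (Kz := Ku u Su). assert (Mv := Mu u Su). fold z v in Mv.
    destruct (SP v Mv) as [Ms Es].
    unfold R. fold z v.
    replace (hadd (hscal (- / lam) z) (Sol v)) with (hadd (Sol v) (hscal (- / lam) z)) by apply hadd_comm.
    rewrite ev_lin, Es.
    unfold ev. rewrite (A_K z Kz). unfold v. apply vec_ext; intro w.
    repeat (rewrite ip_add_l || rewrite ip_sub_l || rewrite ip_scal_l). rewrite ip_zero_l. field. lra.
Qed.

Lemma acos_ge1 x : 1 <= x -> acos x = 0.
Proof. intro h. unfold acos. destruct (Rle_dec x (-1)); [lra|]. destruct (Rle_dec 1 x); [auto|lra]. Qed.

Lemma acos_anti a b : -1 <= a <= b -> acos b <= acos a.
Proof.
  intros [Ha Hab]. destruct (Rle_or_lt 1 b) as [Hb|Hb].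
  - rewrite acos_ge1 by auto. apply acos_bound.
  - apply Rnot_lt_le; intro Hlt.
    assert (B1 := acos_bound a). assert (B2 := acos_bound b).
    assert (C := cos_decreasing_1 _ _ (proj1 B1) (proj2 B1) (proj1 B2) (proj2 B2) Hlt).
    rewrite !cos_acos in C by lra. lra.
Qed.

Lemma acos_ne_PI2 s : 0 < s <= 1 -> acos s <> PI / 2.
Proof. intros Hs E. assert (h := cos_acos s ltac:(lra)). rewrite E, cos_PI2 in h. lra. Qed.

Lemma pow2_eq x : x ^ 2 = x * x.
Proof. ring. Qed.

Lemma main_thm : (exists x : H, (exists y, orth_compl Ts y /\ x = hsub y (S y)) /\ x <> hzero) ->
    Rinf nuset = gamma Ss (orth_compl Ts)
    /\ gamma Ss (orth_compl Ts) = cos (theta_max S Ss T Ts).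
Proof.
  intro hne.
  assert (Hne : exists r, nuset r).
  { destruct hne as [x [Hy Hx]]. eexists; exists x; eauto. }
  destruct (classic NS) as [Hn|Hn]; cycle 1.
  {
    rewrite gamma_subset by auto.
    assert (Sub : forall g, Ss g -> orth_compl Ts g) by (apply NNPP in Hn; exact Hn).
    split.
    - apply Rle_antisym; [apply nu_le1; auto|]. rewrite <- (gamma_subset Hn). apply nu_ge_gam; auto.
    - unfold theta_max. rewrite Rsup_empty; [rewrite cos_0; reflexivity|].
      intros [th [[[s [s0 [Sp ->]]] _] Hne2]].
      assert (s2 : 0 < s ^ 2).
      { destruct s0 as [h|h]; [apply pow_lt; auto|subst s; rewrite acos_0 in Hne2; tauto]. }
      assert (sne : s <> 0) by (intro E; rewrite E in s2; simpl in s2; lra).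
      apply Sp. exists (fun x => hscal (- / s ^ 2) x).
      assert (Z : forall x, Ss x -> S (T x) = hzero).
      { intros x Sx. rewrite (proj1 (T_orth x) (Sub x Sx)). apply (proj_zero Ss S); auto. }
      split; [|split; [|split]].
      + intros x Sx. apply cs_scal; auto.
      + exists (Rabs (- / s ^ 2)). intros x Sx. rewrite hnorm_scal. lra.
      + intros x Sx. rewrite Z by auto. apply vec_ext; intro w.
        rewrite ip_scal_l, ip_sub_l, ip_zero_l, ip_scal_l. field; auto.
      + intros x Sx. rewrite Z by (apply cs_scal; auto). apply vec_ext; intro w.
        rewrite ip_sub_l, ip_zero_l, !ip_scal_l. field; auto. }
  assert (G0 := gam_ge0 Hn). assert (G1 := gam_le1 Hn).
  assert (NG := nu_ge_gam Hne). assert (N1 := nu_le1 Hne).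
  set (gam := gamma Ss (orth_compl Ts)) in *.
  destruct G0 as [Gp|Gz].
  -
    assert (AEg := AE_gam Hn Gp). fold gam in AEg.
    split.
    + apply Rle_antisym; auto.
      destruct G1 as [G1|G1]; [|rewrite G1; auto].
      rewrite <- (sqrt_square gam) by lra.
      apply nu_le_sqrt; auto. split; nra.
    + unfold theta_max.
      rewrite (Rsup_max _ (acos gam)).
      * rewrite cos_acos; auto. lra.
      * split; [split|].
        -- exists gam. split; [lra|]. split; auto. rewrite pow2_eq. apply spec_A; auto.
        -- exists gam. split; [lra|]. split; auto. rewrite pow2_eq. apply spec_B; auto. nra.
        -- apply acos_ne_PI2. lra.
      * intros th [[[s [s0 [Sp ->]]] _] Hne2].
        destruct (Rle_or_lt gam s) as [h|h]; [apply acos_anti; lra|].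
        exfalso.
        assert (sp : 0 < s) by (destruct s0 as [h0|h0]; auto; subst s; rewrite acos_0 in Hne2; tauto).
        apply (not_spec_small (s ^ 2) Hn); auto. fold gam. rewrite pow2_eq. split; nra.
  -
    rewrite <- Gz in *.
    assert (G0' : gamma Ss (orth_compl Ts) = 0) by (symmetry; exact Gz).
    split.
    + apply Rle_antisym; auto.
      apply Rnot_lt_le; intro Hp. set (nu := Rinf nuset) in *.
      destruct (AE_small (Rmin (1/2) (nu * nu / 2)) Hn G0') as [lam [[l0 l1] Al]].
      { split; [apply Rmin_glb_lt; nra|apply Rmin_l]. }
      assert (lc1 : lam < 1/2) by (generalize (Rmin_l (1/2) (nu * nu / 2)); lra).
      assert (lc2 : lam < nu * nu) by (generalize (Rmin_r (1/2) (nu * nu / 2)); nra).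
      assert (L := nu_le_sqrt lam Hne Al ltac:(lra)). fold nu in L.
      assert (h := sqrt_lt_1_alt lam (nu * nu) ltac:(lra)). rewrite sqrt_square in h by lra. lra.
    + unfold theta_max. rewrite (Rsup_char _ (PI / 2)); [rewrite cos_PI2; reflexivity| |].
      * intros th [[[s [s0 [Sp ->]]] _] Hne2]. rewrite <- acos_0. apply acos_anti. lra.
      * intros eps He.
        set (e1 := Rmin eps 1).
        assert (e1p : 0 < e1) by (apply Rmin_glb_lt; lra).
        assert (e11 : e1 <= 1) by apply Rmin_r.
        assert (e1e : e1 <= eps) by apply Rmin_l.
        assert (PIb := PI2_1).
        set (sn := sin e1).
        assert (snp : 0 < sn) by (apply sin_gt_0; lra).
        assert (sn1 : sn <= 1) by apply SIN_bound.
        destruct (AE_small (Rmin (1/2) (sn * sn / 2)) Hn G0') as [lam [[l0 l1] Al]].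
        { split; [apply Rmin_glb_lt; nra|apply Rmin_l]. }
        assert (lc1 : lam < 1/2) by (generalize (Rmin_l (1/2) (sn * sn / 2)); lra).
        assert (lc2 : lam < sn * sn) by (generalize (Rmin_r (1/2) (sn * sn / 2)); nra).
        set (s := sqrt lam).
        assert (sp : 0 < s) by (apply sqrt_lt_R0; auto).
        assert (ss : s * s = lam) by (apply sqrt_sqrt; lra).
        assert (ssn : s < sn) by nra.
        assert (s1 : s < 1) by nra.
        exists (acos s). split; [split; [split|]|].
        -- exists s. split; [lra|]. split; auto. rewrite pow2_eq, ss. apply spec_A; auto.
        -- exists s. split; [lra|]. split; auto. rewrite pow2_eq, ss. apply spec_B; auto.
        -- apply acos_ne_PI2. lra.
        -- apply Rnot_le_lt; intro Hle.
           assert (B := acos_bound s).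
           assert (C : sn <= cos (acos s)).
           { unfold sn. rewrite <- cos_shift.
             destruct (Rle_lt_or_eq_dec (acos s) (PI / 2 - e1)) as [h|h]; [lra| |].
             - left. apply cos_decreasing_1; lra.
             - rewrite h. lra. }
           rewrite cos_acos in C by lra. lra.
Qed.
End ST.


Theorem theorem6 (H : HilbertSpace) (Ss Ts : H -> Prop) (S T : H -> H)
    (hSs : closed_subspace Ss) (hTs : closed_subspace Ts)
    (hS : is_orth_proj Ss S) (hT : is_orth_proj Ts T)
    (hne : exists x : H, (exists y, orth_compl Ts y /\ x = hsub y (S y)) /\ x <> hzero) :
    Rinf (fun r => exists x : H,
            (exists y, orth_compl Ts y /\ x = hsub y (S y)) /\ x <> hzero /\
            r = hnorm (hsub x (T x)) / hnorm x)
      = gamma Ss (orth_compl Ts)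
    /\ gamma Ss (orth_compl Ts) = cos (theta_max S Ss T Ts).
Proof.
  exact (@main_thm H Ss Ts S T hSs hTs hS hT hne).
Qed.
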